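(* Let $H$, its Coxeter generators $s_1,\dots,s_6,s_{3'}$, $G$, the cosets $\pm v(i,j)$, and $H_1$ with its Coxeter generators $a_1,\dots,a_5,a_{1'}$ be as in the context, and define $Q=\langle s_1,s_2,s_3,s_4,s_5,s_{3'}\rangle\subset H$. Then: (a) $Q$ is isomorphic to $H_1$ via the map $m$ determined on generators by $m(s_k)=a_{6-k}$ for $1\le k\le 5$ and $m(s_{3'})=a_{1'}$ (so $Q\cong W(D_6)$); (b) the action of $Q$ by right multiplication on the 56 right cosets of $G$ in $H$ has exactly three orbits, namely $\mathscr{O}_1=\{v(0,j):2\le j\le7\}\cup\{-v(1,j):2\le j\le 7\}$, $\mathscr{O}_2=\{v(1,j):2\le j\le7\}\cup\{-v(0,j):2\le j\le 7\}$, $\mathscr{O}_3=\{\pm v(i,j): (i,j)=(0,1)\text{ or } 2\le i<j\le 7\}$.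
   Context: Let $W=\{(a,b,c,d,e,f,g,h)^T\in\mathbb{C}^8: 2+3a=b+c+d+e+f+g+h\}$. A transposition $(ij)$ is identified with the permutation matrix swapping coordinates $i$ and $j$. Let $X\in GL(8,\mathbb{C})$ be the matrix whose rows are $(\tfrac12,\tfrac12,-\tfrac12,-\tfrac12,-\tfrac12,\tfrac12,\tfrac12,\tfrac12)$, $e_2$, $(-\tfrac12,\tfrac12,\tfrac12,-\tfrac12,-\tfrac12,\tfrac12,\tfrac12,\tfrac12)$, $(-\tfrac12,\tfrac12,-\tfrac12,\tfrac12,-\tfrac12,\tfrac12,\tfrac12,\tfrac12)$, $(-\tfrac12,\tfrac12,-\tfrac12,-\tfrac12,\tfrac12,\tfrac12,\tfrac12,\tfrac12)$, $e_6,e_7,e_8$, and $Y$ the matrix with rows $(-1,2,0,0,0,0,0,0)$, $(-1,1,1,0,0,0,0,0)$, $(0,1,0,0,0,0,0,0)$, and $-e_1+e_2+e_r$ for $r=4,\dots,8$. Let $H=\langle(23),(34),(45),(56),(67),(78),X,Y\rangle\cong W(E_7)$ with Coxeter generators $s_1=Y(23)$, $s_2=(34)$, $s_3=(45)$, $s_4=(56)$, $s_5=(67)$, $s_6=(78)$, $s_{3'}=X$, and $G=\langle s_2,\dots,s_6,s_{3'}\rangle$. For $\vec w\in W$ put $x_0=b,x_1=h,x_2=g,x_3=f,x_4=e,x_5=d,x_6=c,x_7=a$. The right coset $G\alpha$ is determined by the second entry of $\alpha\vec w$ (as an affine function of $\vec w$); $v(i,j)$ ($0\le i<j\le7$) is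 the coset for which this entry is $x_i+x_j-x_7$, and $-v(i,j)$ the coset for which it is $1+x_7-x_i-x_j$; these are all 56 cosets. Let $V=\{(A,\dots,G)^T\in\mathbb{C}^7:E+F+G-A-B-C-D=1\}$, let $X_1\in GL(7,\mathbb{C})$ have rows $e_1$, $-e_3+e_5$, $-e_2+e_5$, $e_4$, $e_5$, $-e_2-e_3+e_5+e_6$, $-e_2-e_3+e_5+e_7$, and let $H_1=\langle(12),(23),(34),(56),(67),X_1\rangle\subset GL(7,\mathbb{C})$ ($\cong W(D_6)$), with Coxeter generators $a_1=(23),a_2=(34),a_3=X_1,a_4=(56),a_5=(67),a_{1'}=(14)$. *)

(* Defs.v *)
From HB Require Import structures.
From mathcomp Require Import all_boot all_order all_algebra all_fingroup all_field.
Set Implicit Arguments. Unset Strict Implicit. Unset Printing Implicit Defensive.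
Import GRing.Theory Num.Theory.
Local Open Scope ring_scope.

(* All matrices are over the complex numbers, modelled by algC. Indices are
   0-based: paper coordinate k (1..n) is ordinal k-1. Matrices act on column
   vectors. *)

Notation M8 := 'M[algC]_8.
Notation M7 := 'M[algC]_7.

Definition mx_rows (n : nat) (l : seq (seq algC)) : 'M[algC]_n :=
  \matrix_(i < n, j < n) nth 0 (nth [::] l i) j.

(* permutation matrix of the transposition swapping paper coordinates i and j
   (1-based) *)
Definition tr8 (i j : nat) : M8 := perm_mx (tperm (inord i.-1 : 'I_8) (inord j.-1)).
Definition tr7 (i j : nat) : M7 := perm_mx (tperm (inord i.-1 : 'I_7) (inord j.-1)).

Definition h : algC := 1 / 2%:R.

Definition Xm : M8 := mx_rows 8
  [:: [:: h; h; -h; -h; -h; h; h; h];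
      [:: 0; 1; 0; 0; 0; 0; 0; 0];
      [:: -h; h; h; -h; -h; h; h; h];
      [:: -h; h; -h; h; -h; h; h; h];
      [:: -h; h; -h; -h; h; h; h; h];
      [:: 0; 0; 0; 0; 0; 1; 0; 0];
      [:: 0; 0; 0; 0; 0; 0; 1; 0];
      [:: 0; 0; 0; 0; 0; 0; 0; 1]].

Definition Ym : M8 := mx_rows 8
  [:: [:: -1; 2%:R; 0; 0; 0; 0; 0; 0];
      [:: -1; 1; 1; 0; 0; 0; 0; 0];
      [:: 0; 1; 0; 0; 0; 0; 0; 0];
      [:: -1; 1; 0; 1; 0; 0; 0; 0];
      [:: -1; 1; 0; 0; 1; 0; 0; 0];
      [:: -1; 1; 0; 0; 0; 1; 0; 0];
      [:: -1; 1; 0; 0; 0; 0; 1; 0];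
      [:: -1; 1; 0; 0; 0; 0; 0; 1]].

Definition X1m : M7 := mx_rows 7
  [:: [:: 1; 0; 0; 0; 0; 0; 0];
      [:: 0; 0; -1; 0; 1; 0; 0];
      [:: 0; -1; 0; 0; 1; 0; 0];
      [:: 0; 0; 0; 1; 0; 0; 0];
      [:: 0; 0; 0; 0; 1; 0; 0];
      [:: 0; -1; -1; 0; 1; 1; 0];
      [:: 0; -1; -1; 0; 1; 0; 1]].

Inductive gen (n : nat) (gs : seq 'M[algC]_n.+1) : 'M[algC]_n.+1 -> Prop :=
  | gen_one : gen gs 1%:M
  | gen_mul g x : g \in gs -> gen gs x -> gen gs (g *m x)
  | gen_inv g x : g \in gs -> gen gs x -> gen gs (invmx g *m x).

Definition s1 : M8 := Ym *m tr8 2 3.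
Definition s2 : M8 := tr8 3 4.
Definition s3 : M8 := tr8 4 5.
Definition s4 : M8 := tr8 5 6.
Definition s5 : M8 := tr8 6 7.
Definition s6 : M8 := tr8 7 8.
Definition s3' : M8 := Xm.

Definition inH : M8 -> Prop :=
  gen [:: tr8 2 3; tr8 3 4; tr8 4 5; tr8 5 6; tr8 6 7; tr8 7 8; Xm; Ym].
Definition inG : M8 -> Prop := gen [:: s2; s3; s4; s5; s6; s3'].
Definition inQ : M8 -> Prop := gen [:: s1; s2; s3; s4; s5; s3'].

Definition a1 : M7 := tr7 2 3.
Definition a2 : M7 := tr7 3 4.
Definition a3 : M7 := X1m.
Definition a4 : M7 := tr7 5 6.
Definition a5 : M7 := tr7 6 7.
Definition a1' : M7 := tr7 1 4.

Definition inH1 : M7 -> Prop :=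
  gen [:: tr7 1 2; tr7 2 3; tr7 3 4; tr7 5 6; tr7 6 7; X1m].

(* the affine hyperplane W : 2 + 3a = b + c + d + e + f + g + h *)
Definition inW (w : 'cV[algC]_8) : Prop :=
  2%:R + 3%:R * w 0 0 = \sum_(k < 8 | k != 0 :> nat) w k 0.

(* x_0 = b, x_1 = h, x_2 = g, ..., x_6 = c, x_7 = a (0-based coordinate index) *)
Definition xidx (k : nat) : nat := nth 0%N [:: 1; 7; 6; 5; 4; 3; 2; 0]%N k.
Definition xc (k : nat) (w : 'cV[algC]_8) : algC := w (inord (xidx k)) 0.

(* affine function labelling the coset: sgn = false gives v(i,j), i.e.
   x_i + x_j - x_7; sgn = true gives -v(i,j), i.e. 1 + x_7 - x_i - x_j *)
Definition labf (sgn : bool) (i j : nat) (w : 'cV[algC]_8) : algC :=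
  if sgn then 1 + xc 7 w - xc i w - xc j w else xc i w + xc j w - xc 7 w.

Definition valid_label (i j : nat) : Prop := (i < j <= 7)%N.

Definition coset_entry (alpha : M8) (f : 'cV[algC]_8 -> algC) : Prop :=
  forall w, inW w -> (alpha *m w) (inord 1) 0 = f w.

Definition same_coset (alpha beta : M8) : Prop :=
  exists g, inG g /\ beta = g *m alpha.

Definition orbit_class (sgn : bool) (i j : nat) : nat :=
  if [|| (~~ sgn && (i == 0%N) && (2 <= j)%N) | (sgn && (i == 1%N) && (2 <= j)%N)] then 1%N
  else if [|| (~~ sgn && (i == 1%N) && (2 <= j)%N) | (sgn && (i == 0%N) && (2 <= j)%N)] then 2%N
  else 3%N.

(* Main.v *)
Require Import Defs.
From HB Require Import structures.
From mathcomp Require Import all_boot all_order all_algebra all_fingroup all_field.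
From mathcomp Require Import zify.
Import GRing.Theory Num.Theory.
Local Open Scope ring_scope.
Set Implicit Arguments. Unset Strict Implicit. Unset Printing Implicit Defensive.

Definition lmx := seq (seq rat).
Fixpoint sumq (l : seq rat) : rat := if l is x :: l' then x + sumq l' else 0.
Definition ent (A : lmx) (i j : nat) : rat := nth 0 (nth [::] A i) j.
Definition lmul (m n p : nat) (A B : lmx) : lmx :=
  mkseq (fun i => mkseq (fun j => sumq (mkseq (fun k => ent A i k * ent B k j) n)) p) m.
Definition ladd (m n : nat) (A B : lmx) : lmx :=
  mkseq (fun i => mkseq (fun j => ent A i j + ent B i j) n) m.
Definition lid (n : nat) : lmx := mkseq (fun i => mkseq (fun j => if i == j then 1 else 0) n) n.
Definition mxq (m n : nat) (A : lmx) : 'M[algC]_(m, n) := \matrix_(i, j) ratr (ent A i j).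

Lemma sumqE l : sumq l = \sum_(x <- l) x.
Proof. by elim: l => [|x l IH] /=; rewrite ?big_nil ?big_cons ?IH. Qed.

Lemma sumq_mkseq n f : sumq (mkseq f n) = \sum_(k < n) f k.
Proof. by rewrite sumqE /mkseq big_map -(subn0 n) big_mkord subn0. Qed.

Lemma ent_mul m n p A B i j : (i < m)%N -> (j < p)%N ->
  ent (lmul m n p A B) i j = \sum_(k < n) ent A i k * ent B k j.
Proof. by move=> hi hj; rewrite /ent /lmul nth_mkseq // nth_mkseq // sumq_mkseq. Qed.

Lemma mxqM m n p A B : mxq m n A *m mxq n p B = mxq m p (lmul m n p A B).
Proof.
apply/matrixP=> i j; rewrite !mxE ent_mul // rmorph_sum; apply: eq_bigr => k _.
by rewrite !mxE rmorphM.
Qed.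

Lemma mxqD m n A B : mxq m n A + mxq m n B = mxq m n (ladd m n A B).
Proof. by apply/matrixP=> i j; rewrite !mxE /ent /ladd !nth_mkseq // rmorphD. Qed.

Lemma mxq1 n : mxq n n (lid n) = 1%:M.
Proof.
apply/matrixP=> i j; rewrite !mxE /ent /lid !nth_mkseq //.
by rewrite -val_eqE /=; case: (val i == val j); rewrite ?rmorph1 ?rmorph0.
Qed.

Lemma mxq_eqb m n A B : A == B -> mxq m n A = mxq m n B.
Proof. by move/eqP->. Qed.

Definition lprod n (gs : seq lmx) (w : seq nat) : lmx :=
  foldr (fun i acc => lmul n n n (nth [::] gs i) acc) (lid n) w.

Lemma gen_word n (gs : seq lmx) w : all (fun i => i < size gs)%N w ->
  gen (map (mxq n.+1 n.+1) gs) (mxq _ _ (lprod n.+1 gs w)).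
Proof.
elim: w => [|i w IH] /=; first by rewrite mxq1 => _; exact: gen_one.
case/andP=> hi hw; rewrite -mxqM; apply: gen_mul; last exact: IH.
by rewrite -(nth_map [::] 0) ?mem_nth ?size_map.
Qed.

Lemma gen_mulmx n (gs : seq 'M[algC]_n.+1) x y : gen gs x -> gen gs y -> gen gs (x *m y).
Proof.
elim=> [|g x' hg _ IH|g x' hg _ IH] hy; first by rewrite mul1mx.
  by rewrite -mulmxA; apply: gen_mul => //; apply: IH.
by rewrite -mulmxA; apply: gen_inv => //; apply: IH.
Qed.

Lemma gen_in n (gs : seq 'M[algC]_n.+1) g : g \in gs -> gen gs g.
Proof. by move=> hg; rewrite -[g]mulmx1; apply: gen_mul => //; exact: gen_one. Qed.

Lemma invmx_invol n (g : 'M[algC]_n.+1) : g *m g = 1%:M -> invmx g = g.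
Proof.
move=> gg; have [gu _] := mulmx1_unit gg.
by rewrite -[RHS]mul1mx -(mulVmx gu) -mulmxA gg mulmx1.
Qed.

Lemma gen_linv n (gs : seq 'M[algC]_n.+1) :
  (forall g, g \in gs -> g *m g = 1%:M) ->
  forall x, gen gs x -> exists y, gen gs y /\ y *m x = 1%:M.
Proof.
move=> inv x0; elim=> [|g x hg _ [y [hy yx]]|g x hg _ [y [hy yx]]].
- by exists 1%:M; split; [exact: gen_one | rewrite mulmx1].
- exists (y *m g); split; first by apply: gen_mulmx => //; exact: gen_in.
  by rewrite -mulmxA [g *m (g *m x)]mulmxA inv // mul1mx.
- exists (y *m g); split; first by apply: gen_mulmx => //; exact: gen_in.
  by rewrite invmx_invol ?inv // -mulmxA (mulmxA g) inv // mul1mx.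
Qed.

Lemma nth_mapmap (l : lmx) i j :
  nth 0 (nth [::] (map (map ratr) l) i) j = ratr (nth 0 (nth [::] l i) j) :> algC.
Proof.
case: (ltnP i (size l)) => hi; last first.
  by rewrite (nth_default [::] (_ : size (map (map ratr) l) <= i)%N) ?size_map //
    (nth_default [::] hi) !nth_nil rmorph0.
rewrite (nth_map [::]) //; case: (ltnP j (size (nth [::] l i))) => hj; last first.
  by rewrite (nth_default 0 (_ : size (map ratr (nth [::] l i)) <= j)%N) ?size_map //
    (nth_default 0 hj) rmorph0.
by rewrite (nth_map 0).
Qed.

Lemma mx_rowsE n l lq : l = map (map ratr) lq -> mx_rows n l = mxq n n lq.
Proof. by move->; apply/matrixP=> i j; rewrite !mxE nth_mapmap. Qed.

Definition tsw (i j a : nat) : nat :=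
  if a == i.-1 then j.-1 else if a == j.-1 then i.-1 else a.
Definition trq (N i j : nat) : lmx :=
  mkseq (fun a => mkseq (fun b => if tsw i j a == b then 1 else 0) N) N.

Lemma tr_mxq n (i j : nat) : (0 < i <= n.+1)%N -> (0 < j <= n.+1)%N ->
  perm_mx (tperm (inord i.-1 : 'I_n.+1) (inord j.-1)) = mxq n.+1 n.+1 (trq n.+1 i j).
Proof.
move=> /andP[i0 iN] /andP[j0 jN].
have hi : (i.-1 < n.+1)%N by rewrite prednK.
have hj : (j.-1 < n.+1)%N by rewrite prednK.
apply/matrixP=> a b; rewrite !mxE /ent /trq !nth_mkseq // -val_eqE.
have -> : \val (tperm (inord i.-1 : 'I_n.+1) (inord j.-1) a) = tsw i j a.
  rewrite /tsw /=; case: (tpermP (inord i.-1 : 'I_n.+1) (inord j.-1) a) => [->|->|ai aj].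
  - by rewrite !inordK // eqxx.
  - by rewrite !inordK // eqxx; case: ifP => // /eqP.
  - have -> : (nat_of_ord a == i.-1) = false.
      by apply/negbTE/eqP => e; apply: ai; apply: val_inj; rewrite /= inordK // -e.
    have -> : (nat_of_ord a == j.-1) = false.
      by apply/negbTE/eqP => e; apply: aj; apply: val_inj; rewrite /= inordK // -e.
    by [].
by case: (tsw i j a == b); rewrite ?rmorph1 ?rmorph0.
Qed.

Definition mq (neg : bool) (p q : nat) : rat := (if neg then -1 else 1) * p%:R / q%:R.
Definition hq : rat := 1 / 2%:R.

Definition Xq : lmx :=
  [:: [:: hq; hq; -hq; -hq; -hq; hq; hq; hq];
      [:: 0; 1; 0; 0; 0; 0; 0; 0];
      [:: -hq; hq; hq; -hq; -hq; hq; hq; hq];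
      [:: -hq; hq; -hq; hq; -hq; hq; hq; hq];
      [:: -hq; hq; -hq; -hq; hq; hq; hq; hq];
      [:: 0; 0; 0; 0; 0; 1; 0; 0];
      [:: 0; 0; 0; 0; 0; 0; 1; 0];
      [:: 0; 0; 0; 0; 0; 0; 0; 1]].

Definition Yq : lmx :=
  [:: [:: -1; 2%:R; 0; 0; 0; 0; 0; 0];
      [:: -1; 1; 1; 0; 0; 0; 0; 0];
      [:: 0; 1; 0; 0; 0; 0; 0; 0];
      [:: -1; 1; 0; 1; 0; 0; 0; 0];
      [:: -1; 1; 0; 0; 1; 0; 0; 0];
      [:: -1; 1; 0; 0; 0; 1; 0; 0];
      [:: -1; 1; 0; 0; 0; 0; 1; 0];
      [:: -1; 1; 0; 0; 0; 0; 0; 1]].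

Definition X1q : lmx :=
  [:: [:: 1; 0; 0; 0; 0; 0; 0];
      [:: 0; 0; -1; 0; 1; 0; 0];
      [:: 0; -1; 0; 0; 1; 0; 0];
      [:: 0; 0; 0; 1; 0; 0; 0];
      [:: 0; 0; 0; 0; 1; 0; 0];
      [:: 0; -1; -1; 0; 1; 1; 0];
      [:: 0; -1; -1; 0; 1; 0; 1]].

Lemma ratr_hq : ratr hq = h :> algC.
Proof. by rewrite /hq /h fmorph_div rmorph1 rmorph_nat. Qed.

Lemma XmE : Xm = mxq 8 8 Xq.
Proof. by apply: mx_rowsE; rewrite /Xq; cbn [map]; rewrite !rmorphN ratr_hq !rmorph0 !rmorph1. Qed.
Lemma YmE : Ym = mxq 8 8 Yq.
Proof. by apply: mx_rowsE; rewrite /Yq; cbn [map]; rewrite !rmorphN !rmorph0 !rmorph1 rmorph_nat. Qed.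
Lemma X1mE : X1m = mxq 7 7 X1q.
Proof. by apply: mx_rowsE; rewrite /X1q; cbn [map]; rewrite !rmorphN !rmorph0 !rmorph1. Qed.

Lemma tr8E i j : (0 < i <= 8)%N -> (0 < j <= 8)%N -> tr8 i j = mxq 8 8 (trq 8 i j).
Proof. exact: (@tr_mxq 7). Qed.
Lemma tr7E i j : (0 < i <= 7)%N -> (0 < j <= 7)%N -> tr7 i j = mxq 7 7 (trq 7 i j).
Proof. exact: (@tr_mxq 6). Qed.

Definition Hq : seq lmx := [:: trq 8 2 3; trq 8 3 4; trq 8 4 5; trq 8 5 6; trq 8 6 7; trq 8 7 8; Xq; Yq].
Definition Gq : seq lmx := [:: trq 8 3 4; trq 8 4 5; trq 8 5 6; trq 8 6 7; trq 8 7 8; Xq].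
Definition s1q : lmx := lmul 8 8 8 Yq (trq 8 2 3).
Definition Qq : seq lmx := [:: s1q; trq 8 3 4; trq 8 4 5; trq 8 5 6; trq 8 6 7; Xq].
Definition H1q : seq lmx := [:: trq 7 1 2; trq 7 2 3; trq 7 3 4; trq 7 5 6; trq 7 6 7; X1q].
Definition Aq : seq lmx := [:: trq 7 6 7; trq 7 5 6; X1q; trq 7 3 4; trq 7 2 3; trq 7 1 4].

Lemma Hs_eq : [:: tr8 2 3; tr8 3 4; tr8 4 5; tr8 5 6; tr8 6 7; tr8 7 8; Xm; Ym] = map (mxq 8 8) Hq.
Proof. by rewrite /= !tr8E // XmE YmE. Qed.
Lemma Gs_eq : [:: s2; s3; s4; s5; s6; s3'] = map (mxq 8 8) Gq.
Proof. by rewrite /= /s2 /s3 /s4 /s5 /s6 /s3' !tr8E // XmE. Qed.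
Lemma s1E : s1 = mxq 8 8 s1q.
Proof. by rewrite /s1 /s1q -mxqM YmE tr8E. Qed.
Lemma Qs_eq : [:: s1; s2; s3; s4; s5; s3'] = map (mxq 8 8) Qq.
Proof. by rewrite /= s1E /s2 /s3 /s4 /s5 /s3' !tr8E // XmE. Qed.
Lemma H1s_eq : [:: tr7 1 2; tr7 2 3; tr7 3 4; tr7 5 6; tr7 6 7; X1m] = map (mxq 7 7) H1q.
Proof. by rewrite /= !tr7E // X1mE. Qed.
Lemma As_eq : [:: a5; a4; a3; a2; a1; a1'] = map (mxq 7 7) Aq.
Proof. by rewrite /= /a5 /a4 /a3 /a2 /a1 /a1' !tr7E // X1mE. Qed.

Definition aff (c : seq rat) (d : rat) (w : 'cV[algC]_8) : algC :=
  \sum_(k < 8) ratr (nth 0 c k) * w k 0 + ratr d.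
Definition ev (k : nat) : seq rat := mkseq (fun t => if t == k then 1 else 0) 8.
Definition addv (c1 c2 : seq rat) : seq rat := mkseq (fun k => nth 0 c1 k + nth 0 c2 k) 8.
Definition oppv (c : seq rat) : seq rat := mkseq (fun k => - nth 0 c k) 8.
Definition zerov : seq rat := nseq 8 0.

Lemma affD c1 d1 c2 d2 w : aff c1 d1 w + aff c2 d2 w = aff (addv c1 c2) (d1 + d2) w.
Proof.
rewrite /aff addrACA -big_split rmorphD /=; congr (_ + _); apply: eq_bigr => k _.
by rewrite /addv nth_mkseq // rmorphD mulrDl.
Qed.

Lemma affN c d w : - aff c d w = aff (oppv c) (- d) w.
Proof.
rewrite /aff opprD -sumrN rmorphN; congr (_ + _); apply: eq_bigr => k _.
by rewrite /oppv nth_mkseq // rmorphN mulNr.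
Qed.

Lemma aff_const d w : ratr d = aff zerov d w.
Proof. by rewrite /aff big1 ?add0r // => k _; rewrite nth_nseq if_same rmorph0 mul0r. Qed.

Lemma aff_ev k (w : 'cV[algC]_8) : (k < 8)%N -> w (inord k) 0 = aff (ev k) 0 w.
Proof.
move=> hk; rewrite /aff rmorph0 addr0 (bigD1 (inord k)) //= big1 ?addr0.
  by rewrite /ev nth_mkseq ?inordK // eqxx rmorph1 mul1r.
move=> t ht; rewrite /ev nth_mkseq //.
have -> : (nat_of_ord t == k) = false.
  apply/negbTE/eqP => e; move/eqP: ht; apply; apply: val_inj; by rewrite /= inordK.
by rewrite rmorph0 mul0r.
Qed.

Lemma xidx_lt k : (xidx k < 8)%N.
Proof. by rewrite /xidx; case: k => [|[|[|[|[|[|[|[|k]]]]]]]] //; rewrite nth_default. Qed.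

Definition labc (sgn : bool) (i j : nat) : seq rat :=
  if sgn then addv (addv (addv zerov (ev (xidx 7))) (oppv (ev (xidx i)))) (oppv (ev (xidx j)))
  else addv (addv (ev (xidx i)) (ev (xidx j))) (oppv (ev (xidx 7))).
Definition labd (sgn : bool) : rat := if sgn then 1 + 0 + - 0 + - 0 else 0 + 0 + - 0.

Lemma labfE sgn i j w : labf sgn i j w = aff (labc sgn i j) (labd sgn) w.
Proof.
rewrite /labf /xc !aff_ev ?xidx_lt //.
case: sgn; rewrite /labc /labd.
  have e1 : (1 : algC) = ratr 1 by rewrite rmorph1.
  by rewrite [1 in LHS]e1 (aff_const 1 w) !affN !affD.
by rewrite !affN !affD.
Qed.

Definition phiq : seq rat := -(3%:R) :: nseq 7 1.

Lemma aff_phi (w : 'cV[algC]_8) : aff phiq 0 w = - 3%:R * w 0 0 + \sum_(k < 8 | k != 0 :> nat) w k 0.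
Proof.
rewrite /aff rmorph0 addr0 big_ord_recl [in RHS]big_mkcond [in RHS]big_ord_recl /=.
rewrite rmorphN rmorph_nat add0r; congr (_ * _ + _); apply: eq_bigr => k _.
rewrite add0n; have : (k < 7)%N := ltn_ord k.
by case: (nat_of_ord k) => [|[|[|[|[|[|[|m]]]]]]] //= _; rewrite rmorph1 mul1r.
Qed.

Lemma inW_phi w : inW w <-> aff phiq 0 w = 2%:R.
Proof.
rewrite aff_phi /inW; split=> [<-|e]; first by rewrite mulNr addrCA addNr addr0.
by rewrite -e mulNr addrAC addNr add0r.
Qed.

Definition eqWb (c : seq rat) (d : rat) (c' : seq rat) (d' : rat) : bool :=
  let lam := (nth 0 c 0 - nth 0 c' 0) / (- 3%:R) in
  all (fun k => nth 0 c k - nth 0 c' k == lam * nth 0 phiq k) (iota 0 8) && (d' - d == 2%:R * lam).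

Lemma eqW_aff c d c' d' w : inW w -> eqWb c d c' d' -> aff c d w = aff c' d' w.
Proof.
move/inW_phi => hw; rewrite /eqWb; set lam := (_ / _); case/andP=> /allP hc /eqP hd.
apply/eqP; rewrite -subr_eq0 affN affD.
have -> : aff (addv c (oppv c')) (d + - d') w = ratr lam * aff phiq 0 w - ratr lam * 2%:R.
  rewrite /aff mulrDr rmorph0 mulr0 addr0 mulr_sumr; congr (_ + _).
    apply: eq_bigr => k _; rewrite /addv /oppv !nth_mkseq //.
    have hk : (nat_of_ord k \in iota 0 8) by rewrite mem_iota ltn_ord.
    move/eqP: (hc _ hk) => ->.
    by rewrite rmorphM mulrA.
  have -> : d + - d' = - (2%:R * lam) by rewrite -hd opprB addrC.
  by rewrite rmorphN rmorphM rmorph_nat mulrC.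
by rewrite hw subrr.
Qed.

Definition affq (c : seq rat) (d : rat) (w : lmx) : rat :=
  sumq (mkseq (fun k => nth 0 c k * ent w k 0) 8) + d.

Lemma aff_q c d wq : aff c d (mxq 8 1 wq) = ratr (affq c d wq).
Proof.
rewrite /aff /affq sumq_mkseq rmorphD rmorph_sum; congr (_ + _).
by apply: eq_bigr => k _; rewrite mxE rmorphM.
Qed.

Lemma rowE (A : lmx) (w : 'cV[algC]_8) : (mxq 8 8 A *m w) (inord 1) 0 = aff (nth [::] A 1) 0 w.
Proof.
rewrite mxE /aff rmorph0 addr0; apply: eq_bigr => k _.
by rewrite mxE /ent inordK.
Qed.

Definition Tl : lmx := [:: [:: mq true 1 2; mq true 1 2; mq false 1 2; mq false 1 2; mq false 1 2; mq false 1 2; mq false 1 2; mq true 1 2];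
    [:: -1; 0; 0; 0; 1; 1; 0; 0];
    [:: -1; 0; 0; 0; 1; 0; 1; 0];
    [:: -1; 0; 0; 0; 0; 1; 1; 0];
    [:: -(2%:R); 0; 0; 1; 1; 1; 1; 0];
    [:: -(2%:R); 0; 1; 0; 1; 1; 1; 0];
    [:: -1; 0; 0; 0; 1; 1; 1; 0]].

Definition Sl : lmx := [:: [:: 0; -1; -1; -1; 0; 0; 2%:R];
    [:: -1; -1; -1; -1; mq false 1 2; mq false 1 2; mq false 3 2];
    [:: 0; -1; -1; -1; 0; 1; 1];
    [:: 0; -1; -1; -1; 1; 0; 1];
    [:: 0; 0; 0; -1; 0; 0; 1];
    [:: 0; 0; -1; 0; 0; 0; 1];
    [:: 0; -1; 0; 0; 0; 0; 1];
    [:: -1; -1; -1; -1; mq false 1 2; mq false 1 2; mq false 3 2]].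

Definition Rl : lmx := [:: [:: 1; 0; 0; 0; -1; -1; 1];
    [:: mq false 1 2; mq false 1 2; mq false 1 2; mq false 1 2; -1; -1; 0];
    [:: 1; 0; 0; 0; -1; 0; 0];
    [:: 1; 0; 0; 0; 0; -1; 0];
    [:: 1; 1; 1; 0; -1; -1; 0];
    [:: 1; 1; 0; 1; -1; -1; 0];
    [:: 1; 0; 1; 1; -1; -1; 0];
    [:: mq true 1 2; mq true 1 2; mq true 1 2; mq true 1 2; 0; 0; 1]].

Definition El : lmx := [:: [:: 1; 0; 0; 0; 0; 0; 0; 0];
    [:: 0; 1; 0; 0; 0; 0; 0; 0];
    [:: 0; 0; 1; 0; 0; 0; 0; 0];
    [:: 0; 0; 0; 1; 0; 0; 0; 0];
    [:: 0; 0; 0; 0; 1; 0; 0; 0];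
    [:: 0; 0; 0; 0; 0; 1; 0; 0];
    [:: 0; 0; 0; 0; 0; 0; 1; 0]].

Definition Kl : lmx := [:: [:: 0; 0; 0; 0; 0; 0; 0; 0];
    [:: 0; 0; 0; 0; 0; 0; 0; -1];
    [:: 0; 0; 0; 0; 0; 0; 0; 0];
    [:: 0; 0; 0; 0; 0; 0; 0; 0];
    [:: 0; 0; 0; 0; 0; 0; 0; 0];
    [:: 0; 0; 0; 0; 0; 0; 0; 0];
    [:: 0; 0; 0; 0; 0; 0; 0; 0];
    [:: 0; 0; 0; 0; 0; 0; 0; 1]].

Definition Pl : lmx := [:: [:: 1; -1; 0; 0; 0; 0; 0; -1];
    [:: mq false 1 2; mq true 1 2; mq true 1 2; mq true 1 2; mq false 1 2; mq false 1 2; mq true 1 2; mq true 1 2];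
    [:: mq false 1 2; mq true 1 2; mq true 1 2; mq true 1 2; mq false 1 2; mq true 1 2; mq false 1 2; mq true 1 2];
    [:: mq false 1 2; mq true 1 2; mq true 1 2; mq true 1 2; mq true 1 2; mq false 1 2; mq false 1 2; mq true 1 2];
    [:: 1; -1; -1; 0; 0; 0; 0; -1];
    [:: 1; -1; 0; -1; 0; 0; 0; -1];
    [:: 2%:R; -1; -1; -1; 0; 0; 0; -1];
    [:: mq true 3 4; mq true 1 4; mq false 1 4; mq false 1 4; mq false 1 4; mq false 1 4; mq false 1 4; mq false 3 4]].

Definition wq : lmx := [:: [:: mq false 25 3];
    [:: 15%:R];
    [:: -(7%:R)];
    [:: 7%:R];
    [:: -(17%:R)];
    [:: 10%:R];
    [:: 3%:R];
    [:: 16%:R]].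

Definition repw : seq (seq nat) := [:: [:: ]; [:: 7; 0]; [:: 7; 0; 1]; [:: 7; 0; 1; 2]; [:: 7; 0; 1; 2; 3]; [:: 7; 0; 1; 2; 3; 4]; [:: 7; 0; 1; 2; 3; 6]; [:: 7; 0; 1; 2; 3; 4; 5]; [:: 7; 0; 1; 2; 3; 4; 6]; [:: 7; 0; 1; 2; 3; 4; 5; 6]; [:: 7; 0; 1; 2; 3; 4; 6; 3]; [:: 7; 0; 1; 2; 3; 4; 5; 6; 3]; [:: 7; 0; 1; 2; 3; 4; 6; 3; 2]; [:: 7; 0; 1; 2; 3; 4; 5; 6; 3; 2]; [:: 7; 0; 1; 2; 3; 4; 5; 6; 3; 4]; [:: 7; 0; 1; 2; 3; 4; 6; 3; 2; 1]; [:: 7; 0; 1; 2; 3; 4; 5; 6; 3; 2; 1]; [:: 7; 0; 1; 2; 3; 4; 5; 6; 3; 2; 4]; [:: 7; 0; 1; 2; 3; 4; 6; 3; 2; 1; 7; 0]; [:: 7; 0; 1; 2; 3; 4; 5; 6; 3; 2; 1; 7; 0]; [:: 7; 0; 1; 2; 3; 4; 5; 6; 3; 2; 1; 4]; [:: 7; 0; 1; 2; 3; 4; 5; 6; 3; 2; 4; 3]; [:: 7; 0; 1; 2; 3; 4; 5; 6; 3; 2; 1; 7; 0; 4]; [:: 7; 0; 1; 2; 3; 4; 5; 6; 3; 2; 1; 4; 3]; [:: 7; 0; 1; 2; 3; 4; 5; 6; 3; 2; 4; 3; 6]; [:: 7; 0; 1; 2; 3; 4; 5; 6; 3; 2; 1;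 7; 0; 4; 3]; [:: 7; 0; 1; 2; 3; 4; 5; 6; 3; 2; 1; 4; 3; 2]; [:: 7; 0; 1; 2; 3; 4; 5; 6; 3; 2; 1; 4; 3; 6]; [:: 7; 0; 1; 2; 3; 4; 5; 6; 3; 2; 1; 7; 0; 4; 3; 2]; [:: 7; 0; 1; 2; 3; 4; 5; 6; 3; 2; 1; 7; 0; 4; 3; 6]; [:: 7; 0; 1; 2; 3; 4; 5; 6; 3; 2; 1; 4; 3; 2; 6]; [:: 7; 0; 1; 2; 3; 4; 5; 6; 3; 2; 1; 7; 0; 4; 3; 2; 1]; [:: 7; 0; 1; 2; 3; 4; 5; 6; 3; 2; 1; 7; 0; 4; 3; 2; 6]; [:: 7; 0; 1; 2; 3; 4; 5; 6; 3; 2; 1; 4; 3; 2; 6; 3]; [:: 7; 0; 1; 2; 3; 4; 5; 6; 3; 2; 1; 7; 0; 4; 3; 2; 1; 6]; [:: 7; 0; 1; 2; 3; 4; 5; 6; 3; 2; 1; 7; 0; 4; 3; 2; 6; 3]; [:: 7; 0; 1; 2; 3; 4; 5; 6; 3; 2; 1; 4; 3; 2; 6; 3; 4]; [:: 7; 0; 1; 2; 3; 4; 5; 6; 3; 2; 1; 7; 0; 4; 3; 2; 1; 6; 3]; [:: 7; 0; 1; 2; 3; 4; 5; 6; 3; 2; 1; 7; 0; 4; 3; 2; 6; 3; 4]; [:: 7; 0; 1; 2; 3; 4; 5; 6; 3; 2; 1; 4; 3; 2; 6; 3; 4; 5]; [:: 7; 0; 1; 2; 3; 4; 5; 6; 3;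 2; 1; 7; 0; 4; 3; 2; 1; 6; 3; 2]; [:: 7; 0; 1; 2; 3; 4; 5; 6; 3; 2; 1; 7; 0; 4; 3; 2; 1; 6; 3; 4]; [:: 7; 0; 1; 2; 3; 4; 5; 6; 3; 2; 1; 7; 0; 4; 3; 2; 6; 3; 4; 5]; [:: 7; 0; 1; 2; 3; 4; 5; 6; 3; 2; 1; 7; 0; 4; 3; 2; 1; 6; 3; 2; 4]; [:: 7; 0; 1; 2; 3; 4; 5; 6; 3; 2; 1; 7; 0; 4; 3; 2; 1; 6; 3; 4; 5]; [:: 7; 0; 1; 2; 3; 4; 5; 6; 3; 2; 1; 7; 0; 4; 3; 2; 1; 6; 3; 2; 4; 3]; [:: 7; 0; 1; 2; 3; 4; 5; 6; 3; 2; 1; 7; 0; 4; 3; 2; 1; 6; 3; 2; 4; 5]; [:: 7; 0; 1; 2; 3; 4; 5; 6; 3; 2; 1; 7; 0; 4; 3; 2; 1; 6; 3; 2; 4; 3; 5]; [:: 7; 0; 1; 2; 3; 4; 5; 6; 3; 2; 1; 7; 0; 4; 3; 2; 1; 6; 3; 2; 4; 3; 6]; [:: 7; 0; 1; 2; 3; 4; 5; 6; 3; 2; 1; 7; 0; 4; 3; 2; 1; 6; 3; 2; 4; 3; 5; 4]; [:: 7; 0; 1; 2; 3; 4; 5; 6; 3; 2; 1; 7; 0; 4; 3; 2; 1; 6; 3; 2; 4; 3; 5; 6]; [:: 7; 0; 1; 2; 3; 4; 5; 6; 3; 2; 1; 7; 0; 4; 3; 2; 1; 6; 3; 2; 4;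 3; 5; 4; 6]; [:: 7; 0; 1; 2; 3; 4; 5; 6; 3; 2; 1; 7; 0; 4; 3; 2; 1; 6; 3; 2; 4; 3; 5; 4; 6; 3]; [:: 7; 0; 1; 2; 3; 4; 5; 6; 3; 2; 1; 7; 0; 4; 3; 2; 1; 6; 3; 2; 4; 3; 5; 4; 6; 3; 2]; [:: 7; 0; 1; 2; 3; 4; 5; 6; 3; 2; 1; 7; 0; 4; 3; 2; 1; 6; 3; 2; 4; 3; 5; 4; 6; 3; 2; 1]; [:: 7; 0; 1; 2; 3; 4; 5; 6; 3; 2; 1; 7; 0; 4; 3; 2; 1; 6; 3; 2; 4; 3; 5; 4; 6; 3; 2; 1; 7; 0]].

Definition actH : seq (seq nat) := [:: [:: 24; 0; 0; 0; 0; 0; 0; 1]; [:: 1; 2; 1; 1; 1; 1; 1; 24]; [:: 29; 1; 3; 2; 2; 2; 2; 29]; [:: 32; 3; 2; 4; 3; 3; 3; 32]; [:: 35; 4; 4; 3; 5; 4; 6; 35]; [:: 38; 5; 5; 5; 4; 7; 8; 38]; [:: 6; 6; 6; 6; 8; 6; 4; 6]; [:: 42; 7; 7; 7; 7; 5; 9; 42]; [:: 8; 8; 8; 10; 6; 9; 5; 8]; [:: 9; 9; 9; 11; 9; 8; 7; 9]; [:: 10; 10; 12; 8; 10; 11; 10; 10]; [:: 11; 11; 13; 9; 14; 10; 11; 11]; [:: 12; 15; 10; 12; 12; 13; 12; 12]; [:: 13; 16; 11; 13; 17; 12; 13; 13]; [:: 14; 14; 17; 14; 11; 14; 14; 14];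 [:: 48; 12; 15; 15; 15; 16; 15; 18]; [:: 50; 13; 16; 16; 20; 15; 16; 19]; [:: 17; 20; 14; 21; 13; 17; 17; 17]; [:: 18; 18; 18; 18; 18; 19; 18; 48]; [:: 19; 19; 19; 19; 22; 18; 19; 50]; [:: 51; 17; 20; 23; 16; 20; 20; 22]; [:: 21; 23; 21; 17; 21; 21; 24; 21]; [:: 22; 22; 22; 25; 19; 22; 22; 51]; [:: 52; 21; 26; 20; 23; 23; 27; 25]; [:: 0; 27; 24; 24; 24; 24; 21; 0]; [:: 25; 25; 28; 22; 25; 25; 29; 52]; [:: 53; 26; 23; 26; 26; 26; 30; 28]; [:: 27; 24; 30; 27; 27; 27; 23; 2]; [:: 28; 31; 25; 28; 28; 28; 32; 53]; [:: 2; 29; 32; 29; 29; 29; 25; 27]; [:: 30; 30; 27; 33; 30; 30; 26; 3]; [:: 55; 28; 31; 31; 31; 31; 34; 55]; [:: 3; 34; 29; 35; 32; 32; 28; 30]; [:: 33; 33; 33; 30; 36; 33; 33; 4]; [:: 34; 32; 34; 37; 34; 34; 31; 34]; [:: 4; 37; 35; 32; 38; 35; 35; 33]; [:: 36; 36; 36; 36; 33; 39; 36; 5]; [:: 37; 35; 40; 34; 41; 37; 37; 37]; [:: 5; 41; 38; 38; 35; 42; 38; 36]; [:: 39; 39; 39; 39; 39; 36; 39; 7]; [:: 40; 40; 37; 40; 43; 40; 40; 40]; [:: 41; 38; 43; 41; 37; 44; 41; 41]; [:: 7; 44; 42; 42; 42; 38; 42; 39]; [:: 43; 43; 41; 45;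 40; 46; 43; 43]; [:: 44; 42; 46; 44; 44; 41; 44; 44]; [:: 45; 45; 45; 43; 45; 47; 48; 45]; [:: 46; 46; 44; 47; 46; 43; 46; 46]; [:: 47; 47; 47; 46; 49; 45; 50; 47]; [:: 15; 48; 48; 48; 48; 50; 45; 15]; [:: 49; 49; 49; 49; 47; 49; 51; 49]; [:: 16; 50; 50; 50; 51; 48; 47; 16]; [:: 20; 51; 51; 52; 50; 51; 49; 20]; [:: 23; 52; 53; 51; 52; 52; 52; 23]; [:: 26; 54; 52; 53; 53; 53; 53; 26]; [:: 54; 53; 54; 54; 54; 54; 54; 31]; [:: 31; 55; 55; 55; 55; 55; 55; 54]].

Definition swH : seq (seq (seq nat)) := [:: [:: [:: 5; 2; 3; 1; 2; 5; 4; 3; 2; 1; 0]; [:: 0]; [:: 1]; [:: 2]; [:: 3]; [:: 4]; [:: 5]; [:: 5; 2; 3; 4; 1; 2; 3; 0; 1; 2; 5; 2; 3; 4; 1; 2; 3; 0; 1; 2; 5]];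
  [:: [:: 5; 2; 3; 4; 1; 2; 3; 0; 1; 2; 5; 2; 3; 4; 1; 2; 3; 0; 1; 2; 5]; [:: ]; [:: 1]; [:: 2]; [:: 3]; [:: 4]; [:: 5]; [:: 5; 2; 3; 1; 2; 5; 4; 3; 2; 1; 0]];
  [:: [:: 5; 2; 3; 0; 1; 2; 5; 4; 3; 2; 1]; [:: ]; [:: ]; [:: 2]; [:: 3]; [:: 4]; [:: 5]; [:: 5; 2; 3; 1; 2; 5; 4; 3; 2; 1]];
  [:: [:: 5; 2; 3; 0; 1; 2; 5; 4; 3; 2; 1]; [:: 1]; [:: ]; [:: ]; [:: 3]; [:: 4]; [:: 5]; [:: 5; 2; 3; 1; 2; 5; 4; 3; 2; 1]];
  [:: [:: 5; 2; 3; 0; 1; 2; 5; 4; 3; 2; 1]; [:: 1]; [:: 2]; [:: ]; [:: ]; [:: 4]; [:: ]; [:: 5; 2; 3; 1; 2; 5; 4; 3; 2; 1]];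
  [:: [:: 5; 2; 3; 0; 1; 2; 5; 4; 3; 2; 1]; [:: 1]; [:: 2]; [:: 3]; [:: ]; [:: ]; [:: ]; [:: 5; 2; 3; 1; 2; 5; 4; 3; 2; 1]];
  [:: [:: 3; 4; 2; 3; 0; 1; 2; 5; 2; 3; 4; 1; 2; 3; 0]; [:: 1]; [:: 2]; [:: 5]; [:: ]; [:: 4]; [:: ]; [:: 3; 4; 2; 3; 1; 2; 5; 2; 3; 4; 1; 2; 3; 0]];
  [:: [:: 5; 2; 3; 0; 1; 2; 5; 4; 3; 2; 1]; [:: 1]; [:: 2]; [:: 3]; [:: 4]; [:: ]; [:: ]; [:: 5; 2; 3; 1; 2; 5; 4; 3; 2; 1]];
  [:: [:: 3; 4; 2; 3; 0; 1; 2; 5; 2; 3; 4; 1; 2; 3; 0]; [:: 1]; [:: 2]; [:: ]; [:: ]; [:: ]; [:: ]; [:: 3; 4; 2; 3; 1; 2; 5; 2; 3; 4; 1; 2; 3; 0]];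
  [:: [:: 3; 4; 2; 3; 0; 1; 2; 5; 2; 3; 4; 1; 2; 3; 0]; [:: 1]; [:: 2]; [:: ]; [:: 4]; [:: ]; [:: ]; [:: 3; 4; 2; 3; 1; 2; 5; 2; 3; 4; 1; 2; 3; 0]];
  [:: [:: 3; 4; 2; 3; 0; 1; 2; 5; 2; 3; 4; 1; 2; 3; 0]; [:: 1]; [:: ]; [:: ]; [:: 5]; [:: ]; [:: 3]; [:: 3; 4; 2; 3; 1; 2; 5; 2; 3; 4; 1; 2; 3; 0]];
  [:: [:: 3; 4; 2; 3; 0; 1; 2; 5; 2; 3; 4; 1; 2; 3; 0]; [:: 1]; [:: ]; [:: ]; [:: ]; [:: ]; [:: 3]; [:: 3; 4; 2; 3; 1; 2; 5; 2; 3; 4; 1; 2; 3; 0]];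
  [:: [:: 3; 4; 2; 3; 0; 1; 2; 5; 2; 3; 4; 1; 2; 3; 0]; [:: ]; [:: ]; [:: 2]; [:: 5]; [:: ]; [:: 3]; [:: 3; 4; 2; 3; 1; 2; 5; 2; 3; 4; 1; 2; 3; 0]];
  [:: [:: 3; 4; 2; 3; 0; 1; 2; 5; 2; 3; 4; 1; 2; 3; 0]; [:: ]; [:: ]; [:: 2]; [:: ]; [:: ]; [:: 3]; [:: 3; 4; 2; 3; 1; 2; 5; 2; 3; 4; 1; 2; 3; 0]];
  [:: [:: 3; 4; 2; 3; 0; 1; 2; 5; 2; 3; 4; 1; 2; 3; 0]; [:: 1]; [:: ]; [:: 4]; [:: ]; [:: 5]; [:: 3]; [:: 3; 4; 2; 3; 1; 2; 5; 2; 3; 4; 1; 2; 3; 0]];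
  [:: [:: 3; 2; 5; 1; 2; 3; 0; 1; 2; 5; 4]; [:: ]; [:: 1]; [:: 2]; [:: 5]; [:: ]; [:: 3]; [:: 3; 4; 2; 3; 1; 2; 5; 2; 3; 4; 1; 2; 3]];
  [:: [:: 3; 2; 5; 1; 2; 3; 0; 1; 2; 5; 4]; [:: ]; [:: 1]; [:: 2]; [:: ]; [:: ]; [:: 3]; [:: 3; 4; 2; 3; 1; 2; 5; 2; 3; 4; 1; 2; 3]];
  [:: [:: 3; 4; 2; 3; 0; 1; 2; 5; 2; 3; 4; 1; 2; 3; 0]; [:: ]; [:: ]; [:: ]; [:: ]; [:: 5]; [:: 3]; [:: 3; 4; 2; 3; 1; 2; 5; 2; 3; 4; 1; 2; 3; 0]];
  [:: [:: 3; 4; 2; 3; 1; 2; 5; 2; 3; 4; 1; 2; 3]; [:: 0]; [:: 1]; [:: 2]; [:: 5]; [:: ]; [:: 3]; [:: 3; 2; 5; 1; 2; 3; 0; 1; 2; 5; 4]];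
  [:: [:: 3; 4; 2; 3; 1; 2; 5; 2; 3; 4; 1; 2; 3]; [:: 0]; [:: 1]; [:: 2]; [:: ]; [:: ]; [:: 3]; [:: 3; 2; 5; 1; 2; 3; 0; 1; 2; 5; 4]];
  [:: [:: 3; 2; 5; 1; 2; 3; 0; 1; 2; 5; 4]; [:: ]; [:: 1]; [:: ]; [:: ]; [:: 5]; [:: 3]; [:: 3; 4; 2; 3; 1; 2; 5; 2; 3; 4; 1; 2; 3]];
  [:: [:: 3; 4; 2; 3; 0; 1; 2; 5; 2; 3; 4; 1; 2; 3; 0]; [:: ]; [:: 4]; [:: ]; [:: 2]; [:: 5]; [:: ]; [:: 3; 4; 2; 3; 1; 2; 5; 2; 3; 4; 1; 2; 3; 0]];
  [:: [:: 3; 4; 2; 3; 1; 2; 5; 2; 3; 4; 1; 2; 3]; [:: 0]; [:: 1]; [:: ]; [:: ]; [:: 5]; [:: 3]; [:: 3; 2; 5; 1; 2; 3; 0; 1; 2; 5; 4]];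
  [:: [:: 3; 2; 5; 1; 2; 3; 0; 1; 2; 5; 4]; [:: ]; [:: ]; [:: ]; [:: 2]; [:: 5]; [:: ]; [:: 3; 4; 2; 3; 1; 2; 5; 2; 3; 4; 1; 2; 3]];
  [:: [:: 0; 1; 2; 5; 3; 4; 2; 3; 1; 2; 5]; [:: ]; [:: 4]; [:: 3]; [:: 2]; [:: 5]; [:: ]; [:: 1; 2; 5; 3; 4; 2; 3; 1; 2; 5]];
  [:: [:: 3; 4; 2; 3; 1; 2; 5; 2; 3; 4; 1; 2; 3]; [:: 0]; [:: ]; [:: ]; [:: 2]; [:: 5]; [:: ]; [:: 3; 2; 5; 1; 2; 3; 0; 1; 2; 5; 4]];
  [:: [:: 3; 2; 5; 1; 2; 3; 0; 1; 2; 5; 4]; [:: 4]; [:: ]; [:: 1]; [:: 2]; [:: 5]; [:: ]; [:: 3; 4; 2; 3; 1; 2; 5; 2; 3; 4; 1; 2; 3]];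
  [:: [:: 1; 2; 3; 0; 1; 2; 5; 2; 3; 1; 2; 0; 1]; [:: ]; [:: ]; [:: 3]; [:: 2]; [:: 5]; [:: ]; [:: 1; 2; 5; 3; 4; 2; 3; 1; 2; 5; 0]];
  [:: [:: 3; 4; 2; 3; 1; 2; 5; 2; 3; 4; 1; 2; 3]; [:: ]; [:: ]; [:: 1]; [:: 2]; [:: 5]; [:: ]; [:: 3; 2; 5; 1; 2; 3; 0; 1; 2; 5; 4]];
  [:: [:: 1; 2; 5; 3; 4; 2; 3; 1; 2; 5; 0]; [:: 0]; [:: ]; [:: 3]; [:: 2]; [:: 5]; [:: ]; [:: 1; 2; 3; 0; 1; 2; 5; 2; 3; 1; 2; 0; 1]];
  [:: [:: 1; 2; 3; 0; 1; 2; 5; 2; 3; 1; 2; 0; 1]; [:: 4]; [:: ]; [:: ]; [:: 2]; [:: 5]; [:: ]; [:: 1; 2; 5; 3; 4; 2; 3; 1; 2; 5; 0]];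
  [:: [:: 4; 3; 2; 5; 1; 2; 3; 0; 1; 2; 5]; [:: ]; [:: 0]; [:: 1]; [:: 2]; [:: 5]; [:: ]; [:: 3; 2; 5; 1; 2; 3; 0; 1; 2; 5]];
  [:: [:: 1; 2; 5; 3; 4; 2; 3; 1; 2; 5; 0]; [:: ]; [:: ]; [:: ]; [:: 2]; [:: 5]; [:: ]; [:: 1; 2; 3; 0; 1; 2; 5; 2; 3; 1; 2; 0; 1]];
  [:: [:: 1; 2; 3; 0; 1; 2; 5; 2; 3; 1; 2; 0; 1]; [:: 4]; [:: 3]; [:: ]; [:: ]; [:: 5]; [:: 1]; [:: 1; 2; 5; 3; 4; 2; 3; 1; 2; 5; 0]];
  [:: [:: 4; 1; 2; 3; 0; 1; 2; 5; 2; 3; 4; 1; 2; 0; 1]; [:: ]; [:: 0]; [:: ]; [:: 2]; [:: 5]; [:: ]; [:: 1; 2; 3; 0; 1; 2; 5; 2; 3; 4; 1; 2; 0; 1]];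
  [:: [:: 1; 2; 5; 3; 4; 2; 3; 1; 2; 5; 0]; [:: ]; [:: 3]; [:: ]; [:: ]; [:: 5]; [:: 1]; [:: 1; 2; 3; 0; 1; 2; 5; 2; 3; 1; 2; 0; 1]];
  [:: [:: 1; 2; 3; 0; 1; 2; 5; 2; 3; 1; 2; 0; 1]; [:: 4]; [:: 3]; [:: 2]; [:: ]; [:: ]; [:: 1]; [:: 1; 2; 5; 3; 4; 2; 3; 1; 2; 5; 0]];
  [:: [:: 4; 1; 2; 3; 0; 1; 2; 5; 2; 3; 4; 1; 2; 0; 1]; [:: ]; [:: ]; [:: ]; [:: ]; [:: 5]; [:: 1]; [:: 1; 2; 3; 0; 1; 2; 5; 2; 3; 4; 1; 2; 0; 1]];
  [:: [:: 1; 2; 5; 3; 4; 2; 3; 1; 2; 5; 0]; [:: ]; [:: 3]; [:: 2]; [:: ]; [:: ]; [:: 1]; [:: 1; 2; 3; 0; 1; 2; 5; 2; 3; 1; 2; 0; 1]];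
  [:: [:: 1; 2; 3; 0; 1; 2; 5; 2; 3; 1; 2; 0; 1]; [:: 4]; [:: 3]; [:: 2]; [:: 5]; [:: ]; [:: 1]; [:: 1; 2; 5; 3; 4; 2; 3; 1; 2; 5; 0]];
  [:: [:: 4; 1; 2; 3; 0; 1; 2; 5; 2; 3; 4; 1; 2; 0; 1]; [:: 3]; [:: ]; [:: 0]; [:: ]; [:: 5]; [:: 1]; [:: 1; 2; 3; 0; 1; 2; 5; 2; 3; 4; 1; 2; 0; 1]];
  [:: [:: 4; 1; 2; 3; 0; 1; 2; 5; 2; 3; 4; 1; 2; 0; 1]; [:: ]; [:: ]; [:: 2]; [:: ]; [:: ]; [:: 1]; [:: 1; 2; 3; 0; 1; 2; 5; 2; 3; 4; 1; 2; 0; 1]];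
  [:: [:: 1; 2; 5; 3; 4; 2; 3; 1; 2; 5; 0]; [:: ]; [:: 3]; [:: 2]; [:: 5]; [:: ]; [:: 1]; [:: 1; 2; 3; 0; 1; 2; 5; 2; 3; 1; 2; 0; 1]];
  [:: [:: 4; 1; 2; 3; 0; 1; 2; 5; 2; 3; 4; 1; 2; 0; 1]; [:: 3]; [:: ]; [:: ]; [:: ]; [:: ]; [:: 1]; [:: 1; 2; 3; 0; 1; 2; 5; 2; 3; 4; 1; 2; 0; 1]];
  [:: [:: 4; 1; 2; 3; 0; 1; 2; 5; 2; 3; 4; 1; 2; 0; 1]; [:: ]; [:: ]; [:: 2]; [:: 5]; [:: ]; [:: 1]; [:: 1; 2; 3; 0; 1; 2; 5; 2; 3; 4; 1; 2; 0; 1]];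
  [:: [:: 4; 1; 2; 3; 0; 1; 2; 5; 2; 3; 4; 1; 2; 0; 1]; [:: 3]; [:: 2]; [:: ]; [:: 0]; [:: ]; [:: ]; [:: 1; 2; 3; 0; 1; 2; 5; 2; 3; 4; 1; 2; 0; 1]];
  [:: [:: 4; 1; 2; 3; 0; 1; 2; 5; 2; 3; 4; 1; 2; 0; 1]; [:: 3]; [:: ]; [:: ]; [:: 5]; [:: ]; [:: 1]; [:: 1; 2; 3; 0; 1; 2; 5; 2; 3; 4; 1; 2; 0; 1]];
  [:: [:: 4; 1; 2; 3; 0; 1; 2; 5; 2; 3; 4; 1; 2; 0; 1]; [:: 3]; [:: 2]; [:: ]; [:: ]; [:: ]; [:: ]; [:: 1; 2; 3; 0; 1; 2; 5; 2; 3; 4; 1; 2; 0; 1]];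
  [:: [:: 5; 4; 2; 3; 1; 2; 5; 0; 1; 2; 3]; [:: 3]; [:: 2]; [:: 1]; [:: 0]; [:: ]; [:: ]; [:: 5; 2; 3; 1; 2; 5; 0; 1; 2; 3]];
  [:: [:: 4; 1; 2; 3; 0; 1; 2; 5; 2; 3; 4; 1; 2; 0; 1]; [:: 3]; [:: 2]; [:: 5]; [:: ]; [:: 0]; [:: ]; [:: 1; 2; 3; 0; 1; 2; 5; 2; 3; 4; 1; 2; 0; 1]];
  [:: [:: 5; 4; 2; 3; 1; 2; 5; 0; 1; 2; 3]; [:: 3]; [:: 2]; [:: 1]; [:: ]; [:: ]; [:: ]; [:: 5; 2; 3; 1; 2; 5; 0; 1; 2; 3]];
  [:: [:: 5; 4; 2; 3; 1; 2; 5; 0; 1; 2; 3]; [:: 3]; [:: 2]; [:: ]; [:: ]; [:: 0]; [:: ]; [:: 5; 2; 3; 1; 2; 5; 0; 1; 2; 3]];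
  [:: [:: 5; 4; 2; 3; 1; 2; 5; 0; 1; 2; 3]; [:: 3]; [:: ]; [:: ]; [:: 1]; [:: 0]; [:: 5]; [:: 5; 2; 3; 1; 2; 5; 0; 1; 2; 3]];
  [:: [:: 5; 4; 2; 3; 1; 2; 5; 0; 1; 2; 3]; [:: ]; [:: ]; [:: 2]; [:: 1]; [:: 0]; [:: 5]; [:: 5; 2; 3; 1; 2; 5; 0; 1; 2; 3]];
  [:: [:: 5; 2; 3; 4; 1; 2; 3; 0; 1; 2; 5; 2; 3; 4; 1; 2; 3; 0; 1; 2; 5]; [:: ]; [:: 3]; [:: 2]; [:: 1]; [:: 0]; [:: 5]; [:: 5; 2; 3; 1; 2; 5; 0; 1; 2; 3; 4]];
  [:: [:: 5; 2; 3; 1; 2; 5; 0; 1; 2; 3; 4]; [:: 4]; [:: 3]; [:: 2]; [:: 1]; [:: 0]; [:: 5]; [:: 5; 2; 3; 4; 1; 2; 3; 0; 1; 2; 5; 2; 3; 4; 1; 2; 3; 0; 1; 2; 5]]].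

Definition actQ : seq (seq nat) := [:: [:: 1; 0; 0; 0; 0; 0]; [:: 0; 2; 1; 1; 1; 1]; [:: 2; 1; 3; 2; 2; 2]; [:: 3; 3; 2; 4; 3; 3]; [:: 4; 4; 4; 3; 5; 6]; [:: 5; 5; 5; 5; 4; 8]; [:: 6; 6; 6; 6; 8; 4]; [:: 7; 7; 7; 7; 7; 9]; [:: 8; 8; 8; 10; 6; 5]; [:: 9; 9; 9; 11; 9; 7]; [:: 10; 10; 12; 8; 10; 10]; [:: 11; 11; 13; 9; 14; 11]; [:: 12; 15; 10; 12; 12; 12]; [:: 13; 16; 11; 13; 17; 13]; [:: 14; 14; 17; 14; 11; 14]; [:: 18; 12; 15; 15; 15; 15]; [:: 19; 13; 16; 16; 20; 16]; [:: 17; 20; 14; 21; 13; 17]; [:: 15; 18; 18; 18; 18; 18]; [:: 16; 19; 19; 19; 22; 19]; [:: 22; 17; 20; 23; 16; 20]; [:: 21; 23; 21; 17; 21; 24]; [:: 20; 22; 22; 25; 19; 22]; [:: 25; 21; 26; 20; 23; 27]; [:: 24; 27; 24; 24; 24; 21]; [:: 23; 25; 28; 22; 25; 29]; [:: 28; 26; 23; 26; 26; 30]; [:: 29; 24; 30; 27; 27; 23]; [:: 26; 31; 25; 28; 28; 32]; [:: 27; 29; 32; 29; 29; 25]; [:: 32; 30; 27; 33; 30; 26]; [:: 31; 28; 31; 31; 31; 34]; [:: 30; 34; 29; 35; 32; 28]; [:: 35; 33; 33; 30; 36; 33]; [:: 34; 32; 34; 37; 34; 31]; [:: 33; 37; 35;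 32; 38; 35]; [:: 38; 36; 36; 36; 33; 36]; [:: 37; 35; 40; 34; 41; 37]; [:: 36; 41; 38; 38; 35; 38]; [:: 42; 39; 39; 39; 39; 39]; [:: 40; 40; 37; 40; 43; 40]; [:: 41; 38; 43; 41; 37; 41]; [:: 39; 44; 42; 42; 42; 42]; [:: 43; 43; 41; 45; 40; 43]; [:: 44; 42; 46; 44; 44; 44]; [:: 45; 45; 45; 43; 45; 48]; [:: 46; 46; 44; 47; 46; 46]; [:: 47; 47; 47; 46; 49; 50]; [:: 48; 48; 48; 48; 48; 45]; [:: 49; 49; 49; 49; 47; 51]; [:: 50; 50; 50; 50; 51; 47]; [:: 51; 51; 51; 52; 50; 49]; [:: 52; 52; 53; 51; 52; 52]; [:: 53; 54; 52; 53; 53; 53]; [:: 55; 53; 54; 54; 54; 54]; [:: 54; 55; 55; 55; 55; 55]].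

Definition swQ : seq (seq (seq nat)) := [:: [:: [:: ]; [:: 0]; [:: 1]; [:: 2]; [:: 3]; [:: 5]];
  [:: [:: ]; [:: ]; [:: 1]; [:: 2]; [:: 3]; [:: 5]];
  [:: [:: 0]; [:: ]; [:: ]; [:: 2]; [:: 3]; [:: 5]];
  [:: [:: 0]; [:: 1]; [:: ]; [:: ]; [:: 3]; [:: 5]];
  [:: [:: 0]; [:: 1]; [:: 2]; [:: ]; [:: ]; [:: ]];
  [:: [:: 0]; [:: 1]; [:: 2]; [:: 3]; [:: ]; [:: ]];
  [:: [:: 0]; [:: 1]; [:: 2]; [:: 5]; [:: ]; [:: ]];
  [:: [:: 0]; [:: 1]; [:: 2]; [:: 3]; [:: 4]; [:: ]];
  [:: [:: 0]; [:: 1]; [:: 2]; [:: ]; [:: ]; [:: ]];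
  [:: [:: 0]; [:: 1]; [:: 2]; [:: ]; [:: 4]; [:: ]];
  [:: [:: 0]; [:: 1]; [:: ]; [:: ]; [:: 5]; [:: 3]];
  [:: [:: 0]; [:: 1]; [:: ]; [:: ]; [:: ]; [:: 3]];
  [:: [:: 0]; [:: ]; [:: ]; [:: 2]; [:: 5]; [:: 3]];
  [:: [:: 0]; [:: ]; [:: ]; [:: 2]; [:: ]; [:: 3]];
  [:: [:: 0]; [:: 1]; [:: ]; [:: 4]; [:: ]; [:: 3]];
  [:: [:: ]; [:: ]; [:: 1]; [:: 2]; [:: 5]; [:: 3]];
  [:: [:: ]; [:: ]; [:: 1]; [:: 2]; [:: ]; [:: 3]];
  [:: [:: 0]; [:: ]; [:: ]; [:: ]; [:: ]; [:: 3]];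
  [:: [:: ]; [:: 0]; [:: 1]; [:: 2]; [:: 5]; [:: 3]];
  [:: [:: ]; [:: 0]; [:: 1]; [:: 2]; [:: ]; [:: 3]];
  [:: [:: ]; [:: ]; [:: 1]; [:: ]; [:: ]; [:: 3]];
  [:: [:: 0]; [:: ]; [:: 4]; [:: ]; [:: 2]; [:: ]];
  [:: [:: ]; [:: 0]; [:: 1]; [:: ]; [:: ]; [:: 3]];
  [:: [:: ]; [:: ]; [:: ]; [:: ]; [:: 2]; [:: ]];
  [:: [:: 0]; [:: ]; [:: 4]; [:: 3]; [:: 2]; [:: ]];
  [:: [:: ]; [:: 0]; [:: ]; [:: ]; [:: 2]; [:: ]];
  [:: [:: ]; [:: 4]; [:: ]; [:: 1]; [:: 2]; [:: ]];
  [:: [:: ]; [:: ]; [:: ]; [:: 3]; [:: 2]; [:: ]];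
  [:: [:: ]; [:: ]; [:: ]; [:: 1]; [:: 2]; [:: ]];
  [:: [:: ]; [:: 0]; [:: ]; [:: 3]; [:: 2]; [:: ]];
  [:: [:: ]; [:: 4]; [:: ]; [:: ]; [:: 2]; [:: ]];
  [:: [:: 4]; [:: ]; [:: 0]; [:: 1]; [:: 2]; [:: ]];
  [:: [:: ]; [:: ]; [:: ]; [:: ]; [:: 2]; [:: ]];
  [:: [:: ]; [:: 4]; [:: 3]; [:: ]; [:: ]; [:: 1]];
  [:: [:: 4]; [:: ]; [:: 0]; [:: ]; [:: 2]; [:: ]];
  [:: [:: ]; [:: ]; [:: 3]; [:: ]; [:: ]; [:: 1]];
  [:: [:: ]; [:: 4]; [:: 3]; [:: 2]; [:: ]; [:: 1]];
  [:: [:: 4]; [:: ]; [:: ]; [:: ]; [:: ]; [:: 1]];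
  [:: [:: ]; [:: ]; [:: 3]; [:: 2]; [:: ]; [:: 1]];
  [:: [:: ]; [:: 4]; [:: 3]; [:: 2]; [:: 5]; [:: 1]];
  [:: [:: 4]; [:: 3]; [:: ]; [:: 0]; [:: ]; [:: 1]];
  [:: [:: 4]; [:: ]; [:: ]; [:: 2]; [:: ]; [:: 1]];
  [:: [:: ]; [:: ]; [:: 3]; [:: 2]; [:: 5]; [:: 1]];
  [:: [:: 4]; [:: 3]; [:: ]; [:: ]; [:: ]; [:: 1]];
  [:: [:: 4]; [:: ]; [:: ]; [:: 2]; [:: 5]; [:: 1]];
  [:: [:: 4]; [:: 3]; [:: 2]; [:: ]; [:: 0]; [:: ]];
  [:: [:: 4]; [:: 3]; [:: ]; [:: ]; [:: 5]; [:: 1]];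
  [:: [:: 4]; [:: 3]; [:: 2]; [:: ]; [:: ]; [:: ]];
  [:: [:: 4]; [:: 3]; [:: 2]; [:: 1]; [:: 0]; [:: ]];
  [:: [:: 4]; [:: 3]; [:: 2]; [:: 5]; [:: ]; [:: ]];
  [:: [:: 4]; [:: 3]; [:: 2]; [:: 1]; [:: ]; [:: ]];
  [:: [:: 4]; [:: 3]; [:: 2]; [:: ]; [:: ]; [:: ]];
  [:: [:: 4]; [:: 3]; [:: ]; [:: ]; [:: 1]; [:: 5]];
  [:: [:: 4]; [:: ]; [:: ]; [:: 2]; [:: 1]; [:: 5]];
  [:: [:: ]; [:: ]; [:: 3]; [:: 2]; [:: 1]; [:: 5]];
  [:: [:: ]; [:: 4]; [:: 3]; [:: 2]; [:: 1]; [:: 5]]].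

Definition pathQ : seq (seq nat) := [:: [:: ]; [:: 0]; [:: 0; 1]; [:: 0; 1; 2]; [:: 0; 1; 2; 3]; [:: 0; 1; 2; 3; 4]; [:: 0; 1; 2; 3; 5]; [:: ]; [:: 0; 1; 2; 3; 4; 5]; [:: 5]; [:: 0; 1; 2; 3; 4; 5; 3]; [:: 5; 3]; [:: 0; 1; 2; 3; 4; 5; 3; 2]; [:: 5; 3; 2]; [:: 5; 3; 4]; [:: 0; 1; 2; 3; 4; 5; 3; 2; 1]; [:: 5; 3; 2; 1]; [:: 5; 3; 2; 4]; [:: 0; 1; 2; 3; 4; 5; 3; 2; 1; 0]; [:: 5; 3; 2; 1; 0]; [:: 5; 3; 2; 1; 4]; [:: 5; 3; 2; 4; 3]; [:: 5; 3; 2; 1; 0; 4]; [:: 5; 3; 2; 1; 4; 3]; [:: 5; 3; 2; 4; 3; 5]; [:: 5; 3; 2; 1; 0; 4; 3]; [:: 5; 3; 2; 1; 4; 3; 2]; [:: 5; 3; 2; 1; 4; 3; 5]; [:: 5; 3; 2; 1; 0; 4; 3; 2]; [:: 5; 3; 2; 1; 0; 4; 3; 5]; [:: 5; 3; 2; 1; 4; 3; 2; 5]; [:: 5; 3; 2; 1; 0; 4; 3; 2; 1]; [:: 5; 3; 2; 1; 0; 4; 3; 2; 5]; [:: 5; 3; 2; 1; 4; 3; 2; 5; 3]; [:: 5; 3; 2; 1; 0; 4; 3; 2; 1; 5]; [:: 5; 3; 2; 1; 0; 4; 3; 2; 5; 3]; [:: 5; 3; 2; 1; 4; 3; 2; 5;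 3; 4]; [:: 5; 3; 2; 1; 0; 4; 3; 2; 1; 5; 3]; [:: 5; 3; 2; 1; 0; 4; 3; 2; 5; 3; 4]; [:: ]; [:: 5; 3; 2; 1; 0; 4; 3; 2; 1; 5; 3; 2]; [:: 5; 3; 2; 1; 0; 4; 3; 2; 1; 5; 3; 4]; [:: 0]; [:: 5; 3; 2; 1; 0; 4; 3; 2; 1; 5; 3; 2; 4]; [:: 0; 1]; [:: 5; 3; 2; 1; 0; 4; 3; 2; 1; 5; 3; 2; 4; 3]; [:: 0; 1; 2]; [:: 0; 1; 2; 3]; [:: 5; 3; 2; 1; 0; 4; 3; 2; 1; 5; 3; 2; 4; 3; 5]; [:: 0; 1; 2; 3; 4]; [:: 0; 1; 2; 3; 5]; [:: 0; 1; 2; 3; 4; 5]; [:: 0; 1; 2; 3; 4; 5; 3]; [:: 0; 1; 2; 3; 4; 5; 3; 2]; [:: 0; 1; 2; 3; 4; 5; 3; 2; 1]; [:: 0; 1; 2; 3; 4; 5; 3; 2; 1; 0]].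

Definition labs : seq (bool * nat * nat) := [:: (false, 0, 7); (false, 0, 6); (false, 0, 5); (false, 0, 4); (false, 0, 3); (false, 0, 2); (true, 1, 2); (false, 0, 1); (true, 1, 3); (true, 2, 3); (true, 1, 4); (true, 2, 4); (true, 1, 5); (true, 2, 5); (true, 3, 4); (true, 1, 6); (true, 2, 6); (true, 3, 5); (true, 1, 7); (true, 2, 7); (true, 3, 6); (true, 4, 5); (true, 3, 7); (true, 4, 6); (false, 6, 7); (true, 4, 7); (true, 5, 6); (false, 5, 7); (true, 5, 7); (false, 5, 6); (false, 4, 7); (true, 6, 7); (false, 4, 6); (false, 3, 7); (false, 4, 5); (false, 3, 6); (false, 2, 7); (false, 3, 5); (false, 2, 6); (false, 1, 7); (false, 3, 4); (false, 2, 5); (false, 1, 6); (false, 2, 4); (false, 1, 5); (false, 2, 3); (false, 1, 4); (false, 1, 3); (true, 0, 1); (false, 1, 2); (true, 0, 2); (true, 0, 3); (true, 0, 4); (true, 0, 5); (true, 0, 6); (true, 0, 7)].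

Definition Rn (n : nat) : lmx := lprod 8 Hq (nth [::] repw n).
Definition actHn n g := nth 0%N (nth [::] actH n) g.
Definition swHn n g := nth [::] (nth [::] swH n) g.
Definition actQn n g := nth 0%N (nth [::] actQ n) g.
Definition swQn n g := nth [::] (nth [::] swQ n) g.

Definition chk_schH : bool :=
  let Rs := map (lprod 8 Hq) repw in
  (size repw == 56%N) &&
  all (fun n => all (fun g =>
     (actHn n g < 56)%N && all (fun i => i < 6)%N (swHn n g) &&
     (lmul 8 8 8 (nth [::] Rs n) (nth [::] Hq g) ==
      lmul 8 8 8 (lprod 8 Gq (swHn n g)) (nth [::] Rs (actHn n g)))) (iota 0 8)) (iota 0 56).

Definition chk_schQ : bool :=
  let Rs := map (lprod 8 Hq) repw in
  all (fun n => all (fun g =>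
     (actQn n g < 56)%N && all (fun i => i < 6)%N (swQn n g) &&
     (lmul 8 8 8 (nth [::] Rs n) (nth [::] Qq g) ==
      lmul 8 8 8 (lprod 8 Gq (swQn n g)) (nth [::] Rs (actQn n g)))) (iota 0 6)) (iota 0 56).

Lemma chk_schH_ok : chk_schH. Proof. vm_compute. reflexivity. Qed.
Lemma chk_schQ_ok : chk_schQ. Proof. vm_compute. reflexivity. Qed.

Definition pw : seq (seq nat) := [:: [:: 4;3;4;5;4;3;4]; [:: 4]; [:: 3]; [:: 1]; [:: 0]; [:: 2]]%N.
Definition aw : seq (seq nat) := [:: [:: 4]; [:: 3]; [:: 5]; [:: 2]; [:: 1]; [:: 2;1;0;1;2]]%N.
Definition labn (n : nat) : bool * nat * nat := nth (false, 0%N, 0%N) labs n.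
Definition cls (n : nat) : nat := orbit_class (labn n).1.1 (labn n).1.2 (labn n).2.
Definition actQw (n : nat) (w : seq nat) : nat := foldl actQn n w.
Definition validb (t : bool * nat * nat) : bool := (t.1.2 < t.2 <= 7)%N.

Definition chk_rep0 : bool := (nth [::] repw 0 == [::]) && all (all (fun i => i < 8)%N) repw.
Definition chk_invH : bool :=
  all (fun g => lmul 8 8 8 (nth [::] Hq g) (nth [::] Hq g) == lid 8) (iota 0 7) &&
  (lmul 8 8 8 Yq (lprod 8 Hq [:: 0; 7; 0]%N) == lid 8).
Definition chk_invG : bool := all (fun A => lmul 8 8 8 A A == lid 8) Gq.
Definition chk_invQ : bool := all (fun A => lmul 8 8 8 A A == lid 8) Qq.
Definition chk_invH1 : bool := all (fun A => lmul 7 7 7 A A == lid 7) H1q.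
Definition chk_rowG : bool := all (fun A => nth [::] A 1 == nth [::] (lid 8) 1) Gq.
Definition chk_lab : bool :=
  (size labs == 56%N) &&
  all (fun n => eqWb (nth [::] (Rn n) 1) 0 (labc (labn n).1.1 (labn n).1.2 (labn n).2) (labd (labn n).1.1))
      (iota 0 56).
Definition chk_valid1 : bool := all validb labs.
Definition chk_valid2 : bool :=
  all (fun s => all (fun i => all (fun j => (i < j <= 7)%N ==> ((s, i, j) \in labs)) (iota 0 8)) (iota 0 8))
      [:: false; true].
Definition lval (t : bool * nat * nat) : rat := affq (labc t.1.1 t.1.2 t.2) (labd t.1.1) wq.
Definition chk_w : bool := affq phiq 0 wq == 2%:R.
Definition chk_uniq : bool :=
  all (fun t1 => all (fun t2 => (lval t1 == lval t2) ==> (t1 == t2)) labs) labs.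
Definition chk_cls : bool :=
  all (fun n => all (fun g => cls (actQn n g) == cls n) (iota 0 6)) (iota 0 56).
Definition chk_path : bool :=
  all (fun n1 => all (fun n2 => (cls n1 == cls n2) ==>
     (all (fun i => i < 6)%N (rev (nth [::] pathQ n1) ++ nth [::] pathQ n2) &&
      (actQw n1 (rev (nth [::] pathQ n1) ++ nth [::] pathQ n2) == n2))) (iota 0 56)) (iota 0 56).
Definition chk_TS : bool := lmul 7 8 7 Tl Sl == lid 7.
Definition chk_T : bool :=
  all (fun i => lmul 7 8 8 Tl (nth [::] Qq i) == lmul 7 7 8 (nth [::] Aq i) Tl) (iota 0 6).
Definition chk_R : bool :=
  all (fun i => lmul 8 8 7 (nth [::] Qq i) Rl == lmul 8 7 7 Rl (nth [::] Aq i)) (iota 0 6).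
Definition chk_K : bool := all (fun i => lmul 8 8 8 (nth [::] Qq i) Kl == Kl) (iota 0 6).
Definition chk_P : bool := lmul 8 8 8 (ladd 8 8 (lmul 8 7 8 Rl El) Kl) Pl == lid 8.
Definition chk_pw : bool :=
  all (fun j => all (fun i => i < 6)%N (nth [::] pw j) && (lprod 7 Aq (nth [::] pw j) == nth [::] H1q j))
      (iota 0 6).
Definition chk_aw : bool :=
  all (fun i => all (fun j => j < 6)%N (nth [::] aw i) && (nth [::] Aq i == lprod 7 H1q (nth [::] aw i)))
      (iota 0 6).

Lemma chk_rep0_ok : chk_rep0. Proof. vm_compute. reflexivity. Qed.
Lemma chk_invH_ok : chk_invH. Proof. vm_compute. reflexivity. Qed.
Lemma chk_invG_ok : chk_invG. Proof. vm_compute. reflexivity. Qed.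
Lemma chk_invQ_ok : chk_invQ. Proof. vm_compute. reflexivity. Qed.
Lemma chk_invH1_ok : chk_invH1. Proof. vm_compute. reflexivity. Qed.
Lemma chk_rowG_ok : chk_rowG. Proof. vm_compute. reflexivity. Qed.
Lemma chk_lab_ok : chk_lab. Proof. vm_compute. reflexivity. Qed.
Lemma chk_valid1_ok : chk_valid1. Proof. vm_compute. reflexivity. Qed.
Lemma chk_valid2_ok : chk_valid2. Proof. vm_compute. reflexivity. Qed.
Lemma chk_w_ok : chk_w. Proof. vm_compute. reflexivity. Qed.
Lemma chk_uniq_ok : chk_uniq. Proof. vm_compute. reflexivity. Qed.
Lemma chk_cls_ok : chk_cls. Proof. vm_compute. reflexivity. Qed.
Lemma chk_path_ok : chk_path. Proof. vm_compute. reflexivity. Qed.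
Lemma chk_TS_ok : chk_TS. Proof. vm_compute. reflexivity. Qed.
Lemma chk_T_ok : chk_T. Proof. vm_compute. reflexivity. Qed.
Lemma chk_R_ok : chk_R. Proof. vm_compute. reflexivity. Qed.
Lemma chk_K_ok : chk_K. Proof. vm_compute. reflexivity. Qed.
Lemma chk_P_ok : chk_P. Proof. vm_compute. reflexivity. Qed.
Lemma chk_pw_ok : chk_pw. Proof. vm_compute. reflexivity. Qed.
Lemma chk_aw_ok : chk_aw. Proof. vm_compute. reflexivity. Qed.

Lemma all_iota (P : pred nat) m n : all P (iota 0 m) -> (n < m)%N -> P n.
Proof. by move/allP => H hn; apply: H; rewrite mem_iota. Qed.

Lemma invmx_r n (A B : 'M[algC]_n.+1) : A *m B = 1%:M -> invmx A = B.
Proof.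
move=> AB; have [Au _] := mulmx1_unit AB.
by rewrite -[B]mul1mx -(mulVmx Au) -mulmxA AB mulmx1.
Qed.

Lemma lprod_cons n gs i w : lprod n gs (i :: w) = lmul n n n (nth [::] gs i) (lprod n gs w).
Proof. by []. Qed.
Lemma lprod_nil n gs : lprod n gs [::] = lid n.
Proof. by []. Qed.

Lemma mem_map_nth n (gs : seq lmx) (g : 'M[algC]_n) :
  g \in map (mxq n n) gs -> exists2 k, (k < size gs)%N & g = mxq n n (nth [::] gs k).
Proof. by case/mapP => A hA ->; exists (index A gs); rewrite ?index_mem ?nth_index. Qed.

Lemma inv_of_chk n (A : lmx) : lmul n.+1 n.+1 n.+1 A A == lid n.+1 ->
  invmx (mxq n.+1 n.+1 A) = mxq n.+1 n.+1 A.
Proof. by move/eqP=> e; apply: invmx_invol; rewrite mxqM e mxq1. Qed.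

Lemma inG_word w : all (fun i => i < 6)%N w -> inG (mxq 8 8 (lprod 8 Gq w)).
Proof. by move=> hw; rewrite /inG Gs_eq; exact: (@gen_word 7). Qed.

Lemma inG_mul x y : inG x -> inG y -> inG (x *m y).
Proof. exact: gen_mulmx. Qed.

Lemma inG1 : inG 1%:M.
Proof. exact: gen_one. Qed.

Lemma inG_linv x : inG x -> exists y, inG y /\ y *m x = 1%:M.
Proof.
apply: gen_linv; rewrite Gs_eq => g /mem_map_nth [k hk ->].
by rewrite mxqM (eqP (allP chk_invG_ok _ (mem_nth _ hk))) mxq1.
Qed.

Lemma inG_row x : inG x -> row (inord 1) x = row (inord 1) (1%:M : 'M[algC]_8).
Proof.
have hg k : (k < size Gq)%N -> row (inord 1) (mxq 8 8 (nth [::] Gq k)) = row (inord 1) 1%:M.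
  move=> hk; have e := eqP (allP chk_rowG_ok _ (mem_nth [::] hk)).
  by rewrite -(mxq1 8); apply/rowP => j; rewrite !mxE /ent inordK // e.
rewrite /inG Gs_eq; elim=> [|g y hg' _ IH|g y hg' _ IH] //.
  by case/mem_map_nth: hg' => k hk ->; rewrite row_mul hg // -row_mul mul1mx.
case/mem_map_nth: hg' => k hk ->.
rewrite (inv_of_chk (allP chk_invG_ok _ (mem_nth [::] hk))).
by rewrite row_mul hg // -row_mul mul1mx.
Qed.

Lemma inG_entry h (Z : 'cV[algC]_8) : inG h -> (h *m Z) (inord 1) 0 = Z (inord 1) 0.
Proof.
move=> hh; have e := congr1 (fun M : 'M[algC]_(1,1) => M 0 0) (row_mul (inord 1) h Z).
rewrite /= mxE in e; rewrite {}e inG_row //.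
by rewrite -row_mul mul1mx mxE.
Qed.

Lemma Rs_nth k : (k < 56)%N -> nth [::] (map (lprod 8 Hq) repw) k = Rn k.
Proof.
move=> hk; have /andP[hs _] := chk_schH_ok.
by rewrite (nth_map [::]) // (eqP hs).
Qed.

Lemma schH n g : (n < 56)%N -> (g < 8)%N ->
  (actHn n g < 56)%N /\ exists h, inG h /\
  mxq 8 8 (Rn n) *m mxq 8 8 (nth [::] Hq g) = h *m mxq 8 8 (Rn (actHn n g)).
Proof.
move=> hn hg; have := chk_schH_ok; rewrite /chk_schH; cbv zeta; case/andP=> _ hall.
have /andP[/andP[ha hw] /eqP e0] := all_iota (all_iota hall hn) hg.
have e : lmul 8 8 8 (Rn n) (nth [::] Hq g) = lmul 8 8 8 (lprod 8 Gq (swHn n g)) (Rn (actHn n g)).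
  by rewrite -(Rs_nth hn) -(Rs_nth ha).
split; first exact: ha.
exists (mxq 8 8 (lprod 8 Gq (swHn n g))); split; first exact: (inG_word hw).
by rewrite !mxqM e.
Qed.

Lemma schQ n g : (n < 56)%N -> (g < 6)%N ->
  (actQn n g < 56)%N /\ exists h, inG h /\
  mxq 8 8 (Rn n) *m mxq 8 8 (nth [::] Qq g) = h *m mxq 8 8 (Rn (actQn n g)).
Proof.
move=> hn hg; have := chk_schQ_ok; rewrite /chk_schQ; cbv zeta => hall.
have /andP[/andP[ha hw] /eqP e0] := all_iota (all_iota hall hn) hg.
have e : lmul 8 8 8 (Rn n) (nth [::] Qq g) = lmul 8 8 8 (lprod 8 Gq (swQn n g)) (Rn (actQn n g)).
  by rewrite -(Rs_nth hn) -(Rs_nth ha).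
split; first exact: ha.
exists (mxq 8 8 (lprod 8 Gq (swQn n g))); split; first exact: (inG_word hw).
by rewrite !mxqM e.
Qed.

Lemma schHw w : all (fun i => i < 8)%N w -> forall n, (n < 56)%N ->
  exists n' h, [/\ (n' < 56)%N, inG h &
  mxq 8 8 (Rn n) *m mxq 8 8 (lprod 8 Hq w) = h *m mxq 8 8 (Rn n')].
Proof.
elim: w => [|g w IH] hw n hn.
  by exists n, 1%:M; split; [exact: hn | exact: inG1 | rewrite lprod_nil mxq1 mulmx1 mul1mx].
case/andP: hw => hg hw; rewrite lprod_cons -mxqM mulmxA.
have [ha [h1 [hh1 ->]]] := schH hn hg.
have [n' [h2 [hn' hh2 e2]]] := IH hw _ ha.
exists n', (h1 *m h2); split; [exact: hn' | exact: inG_mul | ].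
by rewrite -mulmxA e2 mulmxA.
Qed.

Lemma schQw w : all (fun i => i < 6)%N w -> forall n, (n < 56)%N ->
  (actQw n w < 56)%N /\ exists h, inG h /\
  mxq 8 8 (Rn n) *m mxq 8 8 (lprod 8 Qq w) = h *m mxq 8 8 (Rn (actQw n w)).
Proof.
elim: w => [|g w IH] hw n hn.
  by split; [exact: hn | exists 1%:M; split; [exact: inG1 | rewrite lprod_nil mxq1 mulmx1 mul1mx]].
case/andP: hw => hg hw; rewrite lprod_cons -mxqM mulmxA.
have [ha [h1 [hh1 ->]]] := schQ hn hg.
have [hn' [h2 [hh2 e2]]] := IH hw _ ha.
split; first exact: hn'.
exists (h1 *m h2); split; first exact: inG_mul.
by rewrite -mulmxA e2 mulmxA.
Qed.

Lemma R0 : mxq 8 8 (Rn 0) = 1%:M.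
Proof. by have /andP[/eqP e _] := chk_rep0_ok; rewrite /Rn e lprod_nil mxq1. Qed.

Lemma repw_ok n : all (fun i => i < 8)%N (nth [::] repw n).
Proof.
have /andP[_ /allP h] := chk_rep0_ok.
case: (ltnP n (size repw)) => hn; first exact: (h _ (mem_nth [::] hn)).
by rewrite nth_default.
Qed.

Lemma inH_R n : inH (mxq 8 8 (Rn n)).
Proof. by rewrite /inH Hs_eq; apply: (@gen_word 7); exact: repw_ok. Qed.

Definition invw (k : nat) : seq nat := if k == 7%N then [:: 0; 7; 0]%N else [:: k].

Lemma invH k : (k < 8)%N -> all (fun i => i < 8)%N (invw k) /\
  invmx (mxq 8 8 (nth [::] Hq k)) = mxq 8 8 (lprod 8 Hq (invw k)).
Proof.
move=> hk; have /andP[/allP h1 /eqP h2] := chk_invH_ok; rewrite /invw.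
case: eqP => [e7|ne].
  rewrite e7; split; first by [].
  by apply: invmx_r; rewrite mxqM h2 mxq1.
split; first by rewrite /= hk.
rewrite lprod_cons lprod_nil -mxqM mxq1 mulmx1.
have hk7 : k \in iota 0 7.
  by rewrite mem_iota add0n; apply/andP; split; [by [] | lia].
by rewrite (inv_of_chk (h1 k hk7)).
Qed.

Lemma A_H x : inH x -> forall n, (n < 56)%N ->
  exists n' h, [/\ (n' < 56)%N, inG h & mxq 8 8 (Rn n) *m x = h *m mxq 8 8 (Rn n')].
Proof.
rewrite /inH Hs_eq; elim=> [|g y hg _ IH|g y hg _ IH] n hn.
- by exists n, 1%:M; split; [exact: hn | exact: inG1 | rewrite mulmx1 mul1mx].
- case/mem_map_nth: hg => k hk ->.
  have hw : all (fun i => i < 8)%N [:: k] by rewrite /= hk.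
  have [n1 [h1 [hn1 hh1 e1]]] := schHw hw hn.
  rewrite lprod_cons lprod_nil -mxqM mxq1 mulmx1 in e1.
  rewrite mulmxA e1 -mulmxA.
  have [n2 [h2 [hn2 hh2 e2]]] := IH _ hn1.
  by exists n2, (h1 *m h2); split; [exact: hn2 | exact: inG_mul | rewrite e2 mulmxA].
- case/mem_map_nth: hg => k hk ->.
  have [hw ->] := invH hk.
  have [n1 [h1 [hn1 hh1 e1]]] := schHw hw hn.
  rewrite mulmxA e1 -mulmxA.
  have [n2 [h2 [hn2 hh2 e2]]] := IH _ hn1.
  by exists n2, (h1 *m h2); split; [exact: hn2 | exact: inG_mul | rewrite e2 mulmxA].
Qed.

Lemma H_decomp x : inH x -> exists n h, [/\ (n < 56)%N, inG h & x = h *m mxq 8 8 (Rn n)].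
Proof.
move=> hx; have [n [h [hn hh e]]] := A_H hx (isT : (0 < 56)%N).
by exists n, h; split; [exact: hn | exact: hh | rewrite -e R0 mul1mx].
Qed.

Lemma QS x : inQ x -> forall n, (n < 56)%N ->
  exists n' h, [/\ (n' < 56)%N, inG h, cls n' = cls n & mxq 8 8 (Rn n) *m x = h *m mxq 8 8 (Rn n')].
Proof.
have hcls n g : (n < 56)%N -> (g < 6)%N -> cls (actQn n g) = cls n.
  by move=> hn hg; apply/eqP; exact: (all_iota (all_iota chk_cls_ok hn) hg).
rewrite /inQ Qs_eq; elim=> [|g y hg _ IH|g y hg _ IH] n hn.
- by exists n, 1%:M; split; [exact: hn | exact: inG1 | by [] | rewrite mulmx1 mul1mx].
- case/mem_map_nth: hg => k hk ->.
  have [hn1 [h1 [hh1 e1]]] := schQ hn hk.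
  rewrite mulmxA e1 -mulmxA.
  have [n2 [h2 [hn2 hh2 hc e2]]] := IH _ hn1.
  exists n2, (h1 *m h2); split; [exact: hn2 | exact: inG_mul | by rewrite hc hcls | by rewrite e2 mulmxA].
- case/mem_map_nth: hg => k hk ->.
  rewrite (inv_of_chk (allP chk_invQ_ok _ (mem_nth [::] hk))).
  have [hn1 [h1 [hh1 e1]]] := schQ hn hk.
  rewrite mulmxA e1 -mulmxA.
  have [n2 [h2 [hn2 hh2 hc e2]]] := IH _ hn1.
  exists n2, (h1 *m h2); split; [exact: hn2 | exact: inG_mul | by rewrite hc hcls | by rewrite e2 mulmxA].
Qed.

Lemma ce_R h n : inG h -> (n < 56)%N ->
  coset_entry (h *m mxq 8 8 (Rn n)) (labf (labn n).1.1 (labn n).1.2 (labn n).2).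
Proof.
move=> hh hn w hw; rewrite -mulmxA (inG_entry _ hh) rowE labfE; apply: eqW_aff; first exact: hw.
by have /andP[_ hl] := chk_lab_ok; exact: (all_iota hl hn).
Qed.

Lemma size_labs : size labs = 56%N.
Proof. by have /andP[/eqP e _] := chk_lab_ok. Qed.

Lemma labn_in n : (n < 56)%N -> labn n \in labs.
Proof. by move=> hn; rewrite /labn mem_nth // size_labs. Qed.

Lemma lab_uniq x t1 t2 : t1 \in labs -> t2 \in labs ->
  coset_entry x (labf t1.1.1 t1.1.2 t1.2) -> coset_entry x (labf t2.1.1 t2.1.2 t2.2) -> t1 = t2.
Proof.
move=> h1 h2 e1 e2.
have hw : inW (mxq 8 1 wq) by apply/inW_phi; rewrite aff_q (eqP chk_w_ok) rmorph_nat.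
have e : labf t1.1.1 t1.1.2 t1.2 (mxq 8 1 wq) = labf t2.1.1 t2.1.2 t2.2 (mxq 8 1 wq).
  by rewrite -e1 // -e2.
move: e; rewrite !labfE !aff_q => /fmorph_inj e.
have := allP (allP chk_uniq_ok _ h1) _ h2; rewrite /lval e eqxx /=.
by move/eqP.
Qed.

Lemma valid_in s i j : valid_label i j -> (s, i, j) \in labs.
Proof.
rewrite /valid_label => hv.
have hj : (j < 8)%N by case/andP: hv.
have hi : (i < 8)%N by case/andP: hv => h1 h2; lia.
have hs : s \in [:: false; true] by case: s.
have := all_iota (all_iota (allP chk_valid2_ok s hs) hi) hj.
by rewrite hv.
Qed.

Definition T8 : 'M[algC]_(7, 8) := mxq 7 8 Tl.
Definition S8 : 'M[algC]_(8, 7) := mxq 8 7 Sl.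
Definition Rr : 'M[algC]_(8, 7) := mxq 8 7 Rl.
Definition Em : 'M[algC]_(7, 8) := mxq 7 8 El.
Definition Km : 'M[algC]_8 := mxq 8 8 Kl.
Definition Pm : 'M[algC]_8 := mxq 8 8 Pl.
Definition mm (x : 'M[algC]_8) : 'M[algC]_7 := T8 *m x *m S8.

Lemma TS : T8 *m S8 = 1%:M.
Proof. by rewrite /T8 /S8 mxqM (eqP chk_TS_ok) mxq1. Qed.

Lemma mm1 : mm 1%:M = 1%:M.
Proof. by rewrite /mm mulmx1 TS. Qed.

Lemma gen_facts k : (k < 6)%N ->
  [/\ T8 *m mxq 8 8 (nth [::] Qq k) = mxq 7 7 (nth [::] Aq k) *m T8,
      mxq 8 8 (nth [::] Qq k) *m Rr = Rr *m mxq 7 7 (nth [::] Aq k) &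
      mxq 8 8 (nth [::] Qq k) *m Km = Km].
Proof.
move=> hk; split.
- by rewrite /T8 !mxqM (eqP (all_iota chk_T_ok hk)).
- by rewrite /Rr !mxqM (eqP (all_iota chk_R_ok hk)).
- by rewrite /Km !mxqM (eqP (all_iota chk_K_ok hk)).
Qed.

Lemma mm_gen k y : (k < 6)%N -> mm (mxq 8 8 (nth [::] Qq k) *m y) = mxq 7 7 (nth [::] Aq k) *m mm y.
Proof. by move=> hk; have [f1 _ _] := gen_facts hk; rewrite /mm !mulmxA f1. Qed.

Lemma mm_gen1 k : (k < 6)%N -> mm (mxq 8 8 (nth [::] Qq k)) = mxq 7 7 (nth [::] Aq k).
Proof. by move=> hk; rewrite -[mxq 8 8 _]mulmx1 mm_gen // mm1 mulmx1. Qed.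

Lemma Qinv x : inQ x -> [/\ T8 *m x = mm x *m T8, x *m Rr = Rr *m mm x & x *m Km = Km].
Proof.
have step k y : (k < 6)%N -> [/\ T8 *m y = mm y *m T8, y *m Rr = Rr *m mm y & y *m Km = Km] ->
  [/\ T8 *m (mxq 8 8 (nth [::] Qq k) *m y) = mm (mxq 8 8 (nth [::] Qq k) *m y) *m T8,
      (mxq 8 8 (nth [::] Qq k) *m y) *m Rr = Rr *m mm (mxq 8 8 (nth [::] Qq k) *m y) &
      (mxq 8 8 (nth [::] Qq k) *m y) *m Km = Km].
  move=> hk [IH1 IH2 IH3]; have [f1 f2 f3] := gen_facts hk; rewrite mm_gen //; split.
  - by rewrite mulmxA f1 -mulmxA IH1 mulmxA.
  - by rewrite -mulmxA IH2 mulmxA f2 -mulmxA.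
  - by rewrite -mulmxA IH3 f3.
rewrite /inQ Qs_eq; elim=> [|g y hg _ IH|g y hg _ IH].
- by rewrite mm1 mulmx1 !mul1mx mulmx1.
- by case/mem_map_nth: hg => k hk ->; apply: step.
- case/mem_map_nth: hg => k hk ->.
  rewrite (inv_of_chk (allP chk_invQ_ok _ (mem_nth [::] hk))).
  exact: step.
Qed.

Lemma mm_hom x y : inQ x -> mm (x *m y) = mm x *m mm y.
Proof.
move=> hx; have [e1 _ _] := Qinv hx; rewrite /mm in e1 *.
by rewrite !mulmxA -e1.
Qed.

Lemma BP : (Rr *m Em + Km) *m Pm = 1%:M.
Proof. by rewrite /Rr /Em /Km /Pm mxqM mxqD mxqM (eqP chk_P_ok) mxq1. Qed.

Lemma recon x : inQ x -> x = (Rr *m mm x *m Em + Km) *m Pm.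
Proof.
move=> hx; have [_ e2 e3] := Qinv hx.
by rewrite -{1}[x]mulmx1 -BP mulmxA mulmxDr mulmxA e2 e3.
Qed.

Lemma inQ_mul x y : inQ x -> inQ y -> inQ (x *m y).
Proof. exact: gen_mulmx. Qed.

Lemma mm_word w y : all (fun i => i < 6)%N w ->
  inQ (mxq 8 8 (lprod 8 Qq w)) /\ mm (mxq 8 8 (lprod 8 Qq w) *m y) = mxq 7 7 (lprod 7 Aq w) *m mm y.
Proof.
elim: w => [|k w IH] hw.
  split; first by rewrite lprod_nil mxq1; exact: gen_one.
  by rewrite !lprod_nil !mxq1 !mul1mx.
case/andP: hw => hk hw; have [IH1 IH2] := IH hw.
rewrite !lprod_cons -!mxqM; split.
  apply: inQ_mul => //; rewrite /inQ Qs_eq; apply: gen_in.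
  by rewrite -(nth_map [::] 0) ?mem_nth ?size_map.
by rewrite -mulmxA mm_gen // IH2 mulmxA.
Qed.

Lemma inH1_word w : all (fun i => i < 6)%N w -> inH1 (mxq 7 7 (lprod 7 H1q w)).
Proof. by move=> hw; rewrite /inH1 H1s_eq; exact: (@gen_word 6). Qed.

Lemma partA :
  exists m : M8 -> M7,
      (forall x y, inQ x -> inQ y -> m (x *m y) = m x *m m y) /\
      (forall x y, inQ x -> inQ y -> m x = m y -> x = y) /\
      (forall z, inH1 z <-> exists x, inQ x /\ m x = z) /\
      m s1 = a5 /\ m s2 = a4 /\ m s3 = a3 /\ m s4 = a2 /\ m s5 = a1 /\
      m s3' = a1'.
Proof.
exists mm; split; first by move=> x y hx _; exact: mm_hom.
split; first by move=> x y hx hy e; rewrite (recon hx) (recon hy) e.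
split.
  move=> z; split.
    rewrite /inH1 H1s_eq; elim=> [|g z' hg _ [x [hx ex]]|g z' hg _ [x [hx ex]]].
    - by exists 1%:M; split; [exact: gen_one | exact: mm1].
    - case/mem_map_nth: hg => j hj ->.
      have /andP[hw /eqP ew] := all_iota chk_pw_ok hj.
      have [hq e] := mm_word x hw.
      exists (mxq 8 8 (lprod 8 Qq (nth [::] pw j)) *m x); split; first exact: inQ_mul.
      by rewrite e ew ex.
    - case/mem_map_nth: hg => j hj ->.
      rewrite (inv_of_chk (allP chk_invH1_ok _ (mem_nth [::] hj))).
      have /andP[hw /eqP ew] := all_iota chk_pw_ok hj.
      have [hq e] := mm_word x hw.
      exists (mxq 8 8 (lprod 8 Qq (nth [::] pw j)) *m x); split; first exact: inQ_mul.
      by rewrite e ew ex.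
  case=> x [hx <-]; move: hx; rewrite /inQ Qs_eq.
  elim=> [|g y hg _ IH|g y hg _ IH].
  - by rewrite mm1; exact: gen_one.
  - case/mem_map_nth: hg => k hk ->; rewrite mm_gen //.
    have /andP[hw /eqP ew] := all_iota chk_aw_ok hk.
    by rewrite ew; apply: gen_mulmx => //; exact: inH1_word.
  - case/mem_map_nth: hg => k hk ->.
    rewrite (inv_of_chk (allP chk_invQ_ok _ (mem_nth [::] hk))) mm_gen //.
    have /andP[hw /eqP ew] := all_iota chk_aw_ok hk.
    by rewrite ew; apply: gen_mulmx => //; exact: inH1_word.
have e k : (k < 6)%N -> mm (mxq 8 8 (nth [::] Qq k)) = mxq 7 7 (nth [::] Aq k) := @mm_gen1 k.
rewrite s1E /s2 /s3 /s4 /s5 /s3' /a5 /a4 /a3 /a2 /a1 /a1' !tr8E // !tr7E // XmE X1mE.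
split; first exact: (e 0%N).
split; first exact: (e 1%N).
split; first exact: (e 2%N).
split; first exact: (e 3%N).
split; first exact: (e 4%N).
exact: (e 5%N).
Qed.

Lemma labn_valid n : (n < 56)%N -> valid_label (labn n).1.2 (labn n).2.
Proof. by move=> hn; exact: (allP chk_valid1_ok _ (labn_in hn)). Qed.

Lemma ce_lab x n t : (n < 56)%N -> t \in labs ->
  coset_entry x (labf (labn n).1.1 (labn n).1.2 (labn n).2) ->
  coset_entry x (labf t.1.1 t.1.2 t.2) -> t = labn n.
Proof. by move=> hn ht e1 e2; apply: (lab_uniq ht (labn_in hn) e2 e1). Qed.

Lemma partB :
  (forall alpha, inH alpha ->
      exists sgn i j, valid_label i j /\ coset_entry alpha (labf sgn i j)) /\
   (forall sgn i j, valid_label i j ->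
      exists alpha, inH alpha /\ coset_entry alpha (labf sgn i j)) /\
   (forall alpha beta sgn i j sgn' i' j',
      inH alpha -> inH beta -> valid_label i j -> valid_label i' j' ->
      coset_entry alpha (labf sgn i j) -> coset_entry beta (labf sgn' i' j') ->
      ((exists q, inQ q /\ same_coset (alpha *m q) beta) <->
       orbit_class sgn i j = orbit_class sgn' i' j')).
Proof.
split.
  move=> alpha ha; have [n [h [hn hh ->]]] := H_decomp ha.
  exists (labn n).1.1, (labn n).1.2, (labn n).2; split; first exact: labn_valid.
  exact: ce_R.
split.
  move=> s i j hv; have hin := valid_in s hv.
  set n := index (s, i, j) labs.
  have hn : (n < 56)%N by rewrite -size_labs index_mem.
  have hl : labn n = (s, i, j) by rewrite /labn nth_index.
  exists (mxq 8 8 (Rn n)); split; first exact: inH_R.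
  by rewrite -[mxq 8 8 _]mul1mx -[s]/((s, i, j).1.1) -[i]/((s, i, j).1.2) -[j]/((s, i, j).2) -hl;
    apply: ce_R; [exact: inG1 | exact: hn].
move=> alpha beta s i j s' i' j' ha hb hv hv' ca cb.
have [n1 [h1 [hn1 hh1 e1]]] := H_decomp ha.
have [n2 [h2 [hn2 hh2 e2]]] := H_decomp hb.
have t1 : (s, i, j) = labn n1.
  by apply: (ce_lab (x:=alpha) hn1 (valid_in s hv)); [rewrite e1; exact: ce_R | exact: ca].
have t2 : (s', i', j') = labn n2.
  by apply: (ce_lab (x:=beta) hn2 (valid_in s' hv')); [rewrite e2; exact: ce_R | exact: cb].
have c1 : orbit_class s i j = cls n1 by rewrite /cls -t1.
have c2 : orbit_class s' i' j' = cls n2 by rewrite /cls -t2.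
rewrite c1 c2; split.
  case=> q [hq [g [hg eb]]].
  have [n3 [h3 [hn3 hh3 hc e3]]] := QS hq hn1.
  have eb' : beta = (g *m h1 *m h3) *m mxq 8 8 (Rn n3).
    by rewrite eb e1 -mulmxA e3 !mulmxA.
  have t3 : (s', i', j') = labn n3.
    apply: (ce_lab (x:=beta) hn3 (valid_in s' hv')); last exact: cb.
    by rewrite eb'; apply: ce_R => //; apply: inG_mul; [apply: inG_mul|].
  by rewrite -hc /cls -t3 -t2.
move=> hc.
have /andP[hw /eqP hp] : all (fun i => i < 6)%N (rev (nth [::] pathQ n1) ++ nth [::] pathQ n2) &&
    (actQw n1 (rev (nth [::] pathQ n1) ++ nth [::] pathQ n2) == n2).
  by have := all_iota (all_iota chk_path_ok hn1) hn2; rewrite hc eqxx.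
have [_ [h [hh e]]] := schQw hw hn1.
rewrite hp in e.
have [hq _] := mm_word 1%:M hw.
exists (mxq 8 8 (lprod 8 Qq (rev (nth [::] pathQ n1) ++ nth [::] pathQ n2))); split; first exact: hq.
have [y1 [hy1 ey1]] := inG_linv hh1.
have [y [hy ey]] := inG_linv hh.
exists (h2 *m y *m y1); split.
  by apply: inG_mul; [apply: inG_mul|].
rewrite e2 -[mxq 8 8 (Rn n2)]mul1mx -ey -mulmxA -e -[mxq 8 8 (Rn n1)]mul1mx -ey1.
by rewrite -[y1 *m h1 *m _]mulmxA -e1 !mulmxA.
Qed.

Theorem proposition5p3 :
  (exists m : M8 -> M7,
      (forall x y, inQ x -> inQ y -> m (x *m y) = m x *m m y) /\
      (forall x y, inQ x -> inQ y -> m x = m y -> x = y) /\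
      (forall z, inH1 z <-> exists x, inQ x /\ m x = z) /\
      m s1 = a5 /\ m s2 = a4 /\ m s3 = a3 /\ m s4 = a2 /\ m s5 = a1 /\
      m s3' = a1') /\
  ((forall alpha, inH alpha ->
      exists sgn i j, valid_label i j /\ coset_entry alpha (labf sgn i j)) /\
   (forall sgn i j, valid_label i j ->
      exists alpha, inH alpha /\ coset_entry alpha (labf sgn i j)) /\
   (forall alpha beta sgn i j sgn' i' j',
      inH alpha -> inH beta -> valid_label i j -> valid_label i' j' ->
      coset_entry alpha (labf sgn i j) -> coset_entry beta (labf sgn' i' j') ->
      ((exists q, inQ q /\ same_coset (alpha *m q) beta) <->
       orbit_class sgn i j = orbit_class sgn' i' j'))).
Proof. exact: (conj partA partB). Qed.
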